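(* Assume conditions (C1)–(C6) and fix $\zeta\in\Theta$. Let $\varphi_\zeta$ be the bounded solution of the network $(N_\zeta)$ on $\mathbb T_0$ defined below. Then for every $t^0\in\mathbb T_0$ and every solution $x$ of $(N_\zeta)$ on $\mathbb T_0\cap[t^0,\infty)$ one has $\|x(t)-\varphi_\zeta(t)\|\to0$ as $t\to\infty$, $t\in\mathbb T_0$.
   Context: Fix integers $m,n\ge1$ and $r\ge0$. Cells are indexed by pairs $(i,j)$, $1\le i\le m$, $1\le j\le n$. The $r$-neighbourhood of $(i,j)$ is $N_r(i,j)=\{(h,l):1\le h\le m,\ 1\le l\le n,\ \max(|h-i|,|l-j|)\le r\}$. Fix constants $a_{ij}>0$, $C^{hl}_{ij}\ge0$, and a continuous function $f:\mathbb R\to\mathbb R$. Vectors of $\mathbb R^{mn}$ are written $v=\{v_{ij}\}$, with norm $\|v\|=\max_{(i,j)}|v_{ij}|$. Time scale: $\{\theta_k\}_{k\in\mathbb Z}$ is strictly increasing, $\theta_{-1}<0<\theta_0$, and there exist $\omega>0$ and $p\in\mathbb N$ with $\theta_{k+2p}=\theta_k+\omega$ for all $k$. Set $\mathbb T_0=\bigcup_{k\in\mathbb Z}[\theta_{2k-1},\theta_{2k}]$, $\delta_k=\theta_{2k+1}-\theta_{2k}$, $\eta_k=\theta_{2k}-\theta_{2k-1}$ (both $p$-periodic in $k$), $\delta=\max_{1\le k\le p}\delta_k$. On $\mathbb T_0'=\mathbb T_0\setminus\{\theta_{2k-1}:k\in\mathbb Z\}$ define $\psi(t)=t-\sum_{0<\theta_{2k}<t}\delta_k$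 for $t\ge0$ and $\psi(t)=t+\sum_{t\le\theta_{2k}<0}\delta_k$ for $t<0$; put $s_k=\psi(\theta_{2k})$, so $s_k-s_{k-1}=\eta_k$, and write $\psi(\omega):=\omega-\sum_{k=1}^p\delta_k=\sum_{k=1}^p\eta_k$, so $s_{k+p}=s_k+\psi(\omega)$. Inputs: $\Lambda\subset\mathbb R^{mn}$ is compact and $F:\Lambda\to\Lambda$ is continuous. $\Theta$ is the set of all sequences $\zeta=\{\zeta_k\}_{k\in\mathbb Z}$, $\zeta_k=\{\zeta^{ij}_k\}\in\Lambda$, with $\zeta_{k+1}=F(\zeta_k)$ for all $k\in\mathbb Z$. For $\zeta\in\Theta$, $L_{ij}(t,\zeta)=\zeta^{ij}_k$ for $t\in[\theta_{2k-1},\theta_{2k}]$. Network $(N_\zeta)$ on $\mathbb T_0$: $x^\Delta_{ij}(t)=-a_{ij}x_{ij}(t)-\sum_{(h,l)\in N_r(i,j)}C^{hl}_{ij}f(x_{hl}(t))x_{ij}(t)+L_{ij}(t,\zeta)$, $t\in\mathbb T_0$, where the $\Delta$-derivative at $\theta_{2k}$ is $(x(\theta_{2k+1})-x(\theta_{2k}))/\delta_k$ and elsewhere the ordinary derivative. Concretely, a solution on $\mathbb T_0$ (or on $\mathbb T_0\cap[t^0,\infty)$) is a function continuous and (one-sidedly at endpoints) differentiable on each interval $[\theta_{2k-1},\theta_{2k}]$ of its domain satisfying there $x_{ij}'=-a_{ij}x_{ij}-\sum_{(h,l)\in N_r(i,j)}C^{hl}_{ij}f(x_{hl})x_{ij}+\zeta^{ij}_k$,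 together with $x_{ij}(\theta_{2k+1})=(1-\delta_ka_{ij})x_{ij}(\theta_{2k})-\delta_k\sum_{(h,l)\in N_r(i,j)}C^{hl}_{ij}f(x_{hl}(\theta_{2k}))x_{ij}(\theta_{2k})+\delta_k\zeta^{ij}_k$. Impulsive system $(I_\zeta)$: for $s\in(s_{k-1},s_k)$, $y_{ij}'(s)=-a_{ij}y_{ij}(s)-\sum_{(h,l)\in N_r(i,j)}C^{hl}_{ij}f(y_{hl}(s))y_{ij}(s)+\zeta^{ij}_k$, and at $s=s_k$, $y_{ij}(s_k+)-y_{ij}(s_k)=-\delta_ka_{ij}y_{ij}(s_k)-\delta_k\sum_{(h,l)\in N_r(i,j)}C^{hl}_{ij}f(y_{hl}(s_k))y_{ij}(s_k)+\delta_k\zeta^{ij}_k$. Solutions are left-continuous, continuous except for discontinuities of the first kind at the $s_k$. Let $u_{ij}(s,\tau)=e^{-a_{ij}(s-\tau)}\prod_{\nu=l}^{k}(1-\delta_\nu a_{ij})$ if $s_{l-1}<\tau\le s_l$, $s_k<s\le s_{k+1}$, $k\ge l$, and $u_{ij}(s,\tau)=e^{-a_{ij}(s-\tau)}$ if $s_k<\tau\le s\le s_{k+1}$. Let $\lambda_{ij}=a_{ij}-\frac1{\psi(\omega)}\sum_{\nu=0}^{p-1}\ln|1-\delta_\nu a_{ij}|$, $\lambda=\min_{(i,j)}\lambda_{ij}$. Conditions: (C1) $\delta_ka_{ij}\ne1$ for all $i,j,k$; (C2) $\lambda>0$; (C3) $\sup_{s\in\mathbb R}|f(s)|\le M_f$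 for some $M_f>0$; (C4) $|f(s_1)-f(s_2)|\le L_f|s_1-s_2|$ for all $s_1,s_2$, for some $L_f>0$. Under (C1),(C2) fix positive numbers $K_{ij}$ with $|u_{ij}(s,\tau)|\le K_{ij}e^{-\lambda_{ij}(s-\tau)}$ for $s\ge\tau$. Define $\bar c=\max_{(i,j)}\big(\frac{K_{ij}}{\lambda_{ij}}+\frac{p\delta K_{ij}}{1-e^{-\lambda_{ij}\psi(\omega)}}\big)\sum_{(h,l)\in N_r(i,j)}C^{hl}_{ij}$, $M_F=\max_{\eta\in\Lambda}\|F(\eta)\|$, $H_0=\frac{M_F}{1-M_f\bar c}\max_{(i,j)}\big(\frac{K_{ij}}{\lambda_{ij}}+\frac{p\delta K_{ij}}{1-e^{-\lambda_{ij}\psi(\omega)}}\big)$, $\bar d=(M_f+H_0L_f)\max_{(i,j)}K_{ij}\sum_{(h,l)\in N_r(i,j)}C^{hl}_{ij}$. (C5) $(M_f+H_0L_f)\bar c<1$. (C6) $-\lambda+\bar d+\frac{p}{\psi(\omega)}\ln(1+\delta\bar d)<0$. Under (C1)–(C5), for $\zeta\in\Theta$ the system $(I_\zeta)$ has a unique solution $\phi_\zeta$ on $\mathbb R$ with $\sup_s\|\phi_\zeta(s)\|\le H_0$; define $\varphi_\zeta:\mathbb T_0\to\mathbb R^{mn}$ by $\varphi_\zeta(t)=\phi_\zeta(\psi(t))$ for $t\in\mathbb T_0'$ and $\varphi_\zeta(\theta_{2k+1})=\phi_\zeta(s_k+)$. Then $\varphi_\zeta$ is the unique solution of $(N_\zeta)$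 on $\mathbb T_0$ with $\sup_{t\in\mathbb T_0}\|\varphi_\zeta(t)\|\le H_0$. *)

(* Defs.v *)
From Stdlib Require Import Reals Lra Lia ZArith List.
Open Scope R_scope.

(* Vectors of R^{mn}: functions of the cell indices (i,j); only the entries
   with 1 <= i <= m, 1 <= j <= n are meaningful. *)
Definition vec := nat -> nat -> R.

Definition in_cell (m n i j : nat) : Prop := (1 <= i <= m)%nat /\ (1 <= j <= n)%nat.

Definition cells (m n : nat) : list (nat * nat) :=
  flat_map (fun i => map (fun j => (i, j)) (seq 1 n)) (seq 1 m).

(* max / min over all cells (exact max/min when m,n >= 1) *)
Definition cellmax (m n : nat) (g : nat -> nat -> R) : R :=
  fold_right (fun c acc => Rmax (g (fst c) (snd c)) acc) (g 1%nat 1%nat) (cells m n).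
Definition cellmin (m n : nat) (g : nat -> nat -> R) : R :=
  fold_right (fun c acc => Rmin (g (fst c) (snd c)) acc) (g 1%nat 1%nat) (cells m n).

Definition vnorm (m n : nat) (v : vec) : R := cellmax m n (fun i j => Rabs (v i j)).
Definition vsub (u v : vec) : vec := fun i j => u i j - v i j.

Definition natdist (a b : nat) : nat := ((a - b) + (b - a))%nat.

Definition nbsum (m n r i j : nat) (g : nat -> nat -> R) : R :=
  fold_right (fun c acc =>
    (if andb (Nat.leb (natdist (fst c) i) r) (Nat.leb (natdist (snd c) j) r)
     then g (fst c) (snd c) else 0) + acc) 0 (cells m n).

(* sum / product over integer range lo..hi (empty if hi < lo) *)
Definition sumZ (lo hi : Z) (g : Z -> R) : R :=
  fold_right (fun i acc => g (lo + Z.of_nat i)%Z + acc) 0 (seq 0 (Z.to_nat (hi - lo + 1))).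
Definition prodZ (lo hi : Z) (g : Z -> R) : R :=
  fold_right (fun i acc => g (lo + Z.of_nat i)%Z * acc) 1 (seq 0 (Z.to_nat (hi - lo + 1))).

Definition delta_k (th : Z -> R) (k : Z) : R := th (2 * k + 1)%Z - th (2 * k)%Z.
Definition eta_k (th : Z -> R) (k : Z) : R := th (2 * k)%Z - th (2 * k - 1)%Z.
Definition delta_max (th : Z -> R) (p : nat) : R :=
  fold_right (fun k acc => Rmax (delta_k th (Z.of_nat k)) acc) (delta_k th 1%Z) (seq 1 p).
Definition psi_omega (th : Z -> R) (p : nat) : R := sumZ 1 (Z.of_nat p) (eta_k th).
(* s_k = psi(theta_{2k}), written out from the definition of psi *)
Definition s_k (th : Z -> R) (k : Z) : R :=
  if (0 <=? k)%Z then th (2 * k)%Z - sumZ 0 (k - 1) (delta_k th)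
  else th (2 * k)%Z + sumZ k (-1) (delta_k th).
Definition inT0 (th : Z -> R) (t : R) : Prop :=
  exists k : Z, th (2 * k - 1)%Z <= t <= th (2 * k)%Z.

Definition lam_ij (th : Z -> R) (p : nat) (a : nat -> nat -> R) (i j : nat) : R :=
  a i j - / psi_omega th p *
    sumZ 0 (Z.of_nat p - 1) (fun nu => ln (Rabs (1 - delta_k th nu * a i j))).
Definition lam (m n : nat) th p a : R := cellmin m n (lam_ij th p a).

(* u_ij(s,tau) for s_{l-1} < tau <= s_l, s_k < s <= s_{k+1}
   (the product is empty when k = l-1, i.e. same interval) *)
Definition ufun (th : Z -> R) (a : nat -> nat -> R) (i j : nat) (l k : Z) (s tau : R) : R :=
  exp (- a i j * (s - tau)) * prodZ l k (fun nu => 1 - delta_k th nu * a i j).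

Definition Kfactor th p a (K : nat -> nat -> R) (i j : nat) : R :=
  K i j / lam_ij th p a i j
  + INR p * delta_max th p * K i j / (1 - exp (- lam_ij th p a i j * psi_omega th p)).
Definition Csum (m n r : nat) (C : nat -> nat -> nat -> nat -> R) (i j : nat) : R :=
  nbsum m n r i j (fun h l => C i j h l).
Definition cbar m n r th p a K C : R :=
  cellmax m n (fun i j => Kfactor th p a K i j * Csum m n r C i j).
Definition H0 m n r th p a K C (Mf MF : R) : R :=
  MF / (1 - Mf * cbar m n r th p a K C) * cellmax m n (fun i j => Kfactor th p a K i j).
Definition dbar m n r th p a K C (Mf Lf MF : R) : R :=
  (Mf + H0 m n r th p a K C Mf MF * Lf) * cellmax m n (fun i j => K i j * Csum m n r C i j).

Definition seq_compact (m n : nat) (Lam : vec -> Prop) : Prop :=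
  forall u : nat -> vec, (forall q, Lam (u q)) ->
  exists (sub : nat -> nat) (lim : vec),
    (forall q, (sub q < sub (S q))%nat) /\ Lam lim /\
    forall eps, 0 < eps -> exists N, forall q, (N <= q)%nat ->
      vnorm m n (vsub (u (sub q)) lim) < eps.
Definition cont_on (m n : nat) (Lam : vec -> Prop) (F : vec -> vec) : Prop :=
  forall v, Lam v -> forall eps, 0 < eps -> exists del, 0 < del /\
    forall w, Lam w -> vnorm m n (vsub w v) < del -> vnorm m n (vsub (F w) (F v)) < eps.

Definition net_rhs (m n r : nat) (a : nat -> nat -> R) (C : nat -> nat -> nat -> nat -> R)
  (f : R -> R) (v : vec) (i j : nat) : R :=
  - a i j * v i j - nbsum m n r i j (fun h l => C i j h l * f (v h l)) * v i j.

Definition has_deriv_within (g : R -> R) (lo hi t d : R) : Prop :=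
  forall eps, 0 < eps -> exists del, 0 < del /\
    forall h, h <> 0 -> Rabs h < del -> lo <= t + h <= hi ->
      Rabs ((g (t + h) - g t) / h - d) < eps.

Definition ode_piece m n r a C f (zeta : Z -> vec) (x : R -> vec) (lo hi : R) (k : Z) : Prop :=
  forall t, lo <= t <= hi -> forall i j, in_cell m n i j ->
    has_deriv_within (fun s => x s i j) lo hi t (net_rhs m n r a C f (x t) i j + zeta k i j).

Definition jump_cond m n r a C f (th : Z -> R) (zeta : Z -> vec) (x : R -> vec) (k : Z) : Prop :=
  forall i j, in_cell m n i j ->
    x (th (2 * k + 1)%Z) i j =
      (1 - delta_k th k * a i j) * x (th (2 * k)%Z) i j
      - delta_k th k * nbsum m n r i j (fun h l => C i j h l * f (x (th (2 * k)%Z) h l))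
          * x (th (2 * k)%Z) i j
      + delta_k th k * zeta k i j.

Definition sol_T0 m n r a C f th zeta (x : R -> vec) : Prop :=
  forall k : Z, ode_piece m n r a C f zeta x (th (2 * k - 1)%Z) (th (2 * k)%Z) k
             /\ jump_cond m n r a C f th zeta x k.

Definition sol_from m n r a C f th zeta (t0 : R) (x : R -> vec) : Prop :=
  forall k : Z, t0 <= th (2 * k)%Z ->
    ode_piece m n r a C f zeta x (Rmax t0 (th (2 * k - 1)%Z)) (th (2 * k)%Z) k
    /\ jump_cond m n r a C f th zeta x k.

(* Main.v *)
Require Import Defs.
From Stdlib Require Import Reals ZArith.
From Stdlib Require Import Lra Lia List Classical.
Open Scope R_scope.


Lemma real_ind (lo hi : R) (P : R -> Prop) : lo <= hi ->
  (forall t, lo <= t <= hi -> (forall u, lo <= u < t -> P u) -> P t) ->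
  (forall t, lo <= t < hi -> (forall u, lo <= u <= t -> P u) ->
     exists d, 0 < d /\ forall u, t < u < t + d -> u <= hi -> P u) ->
  forall t, lo <= t <= hi -> P t.
Proof.
  intros Hle H1 H2.
  set (E := fun t => lo <= t <= hi /\ forall u, lo <= u <= t -> P u).
  assert (Elo : E lo).
  { split; [lra|]. intros u Hu. assert (u = lo) by lra. subst u.
    apply H1; [lra|]. intros; lra. }
  assert (Eb : bound E). { exists hi. intros x [Hx _]; lra. }
  destruct (completeness E Eb (ex_intro _ lo Elo)) as [s [Hub Hlub]].
  assert (Hs1 : lo <= s) by (apply Hub; exact Elo).
  assert (Hs2 : s <= hi) by (apply Hlub; intros x [Hx _]; lra).
  assert (Hbelow : forall u, lo <= u < s -> P u).
  { intros u Hu. destruct (Rle_dec s u) as [|Hn]; [lra|].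
    destruct (classic (exists x, E x /\ u < x)) as [[x [[Hx1 Hx2] Hx3]]|Hno].
    - apply Hx2; lra.
    - exfalso. assert (s <= u); [|lra]. apply Hlub. intros x Ex.
      destruct (Rle_dec x u); [auto|]. exfalso; apply Hno; exists x; split; [auto|lra]. }
  assert (Ps : P s) by (apply H1; [lra|exact Hbelow]).
  assert (Es : E s).
  { split; [lra|]. intros u Hu. destruct (Req_dec u s) as [->|]; [auto|]. apply Hbelow; lra. }
  assert (Hshi : s = hi).
  { destruct (Req_dec s hi) as [|Hne]; [auto|]. exfalso.
    destruct (H2 s ltac:(lra) (proj2 Es)) as [d [Hd Hext]].
    set (s' := Rmin (s + d/2) hi).
    assert (Es' : E s').
    { unfold s'; split. { unfold Rmin; destruct (Rle_dec (s + d/2) hi); lra. }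
      intros u Hu. destruct (Rle_dec u s). { apply (proj2 Es); lra. }
      apply Hext. { split; [lra|]. unfold s',Rmin in Hu; destruct (Rle_dec (s+d/2) hi); lra. }
      unfold s',Rmin in Hu; destruct (Rle_dec (s+d/2) hi); lra. }
    assert (s' <= s) by (apply Hub; exact Es').
    unfold s',Rmin in H; destruct (Rle_dec (s+d/2) hi); lra. }
  intros t Ht. subst s. apply (proj2 Es). lra.
Qed.


Lemma hdw_cont g lo hi t d : has_deriv_within g lo hi t d ->
  forall eps, 0 < eps -> exists del, 0 < del /\ forall u, lo <= u <= hi -> Rabs (u - t) < del ->
    Rabs (g u - g t) < eps.
Proof.
  intros H eps Heps. destruct (H 1 Rlt_0_1) as [d1 [Hd1 Hq]].
  exists (Rmin d1 (eps / (Rabs d + 1))). split.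
  { apply Rmin_pos; [lra|]. apply Rdiv_lt_0_compat; [lra|]. pose proof (Rabs_pos d); lra. }
  intros u Hu Hut. destruct (Req_dec u t) as [->|Hne].
  { rewrite Rminus_diag, Rabs_R0; lra. }
  assert (Hh : u - t <> 0) by lra.
  assert (Hlt1 : Rabs (u - t) < d1) by (eapply Rlt_le_trans; [exact Hut|apply Rmin_l]).
  assert (Hlt2 : Rabs (u - t) < eps / (Rabs d + 1)) by (eapply Rlt_le_trans; [exact Hut|apply Rmin_r]).
  specialize (Hq (u - t) Hh Hlt1). replace (t + (u - t)) with u in Hq by ring.
  specialize (Hq Hu).
  assert (Hq' : Rabs ((g u - g t) / (u - t)) < Rabs d + 1).
  { pose proof (Rabs_triang ((g u - g t) / (u - t) - d) d).
    replace ((g u - g t) / (u - t) - d + d) with ((g u - g t) / (u - t)) in H0 by ring. lra. }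
  replace (g u - g t) with ((g u - g t) / (u - t) * (u - t)) by (field; auto).
  rewrite Rabs_mult.
  assert (0 < Rabs (u - t)) by (apply Rabs_pos_lt; auto).
  assert (Hpos : 0 < Rabs d + 1) by (pose proof (Rabs_pos d); lra).
  apply Rlt_le_trans with ((Rabs d + 1) * Rabs (u - t)).
  { apply Rmult_lt_compat_r; auto. }
  apply Rle_trans with ((Rabs d + 1) * (eps / (Rabs d + 1))).
  { apply Rmult_le_compat_l; lra. }
  right; field; lra.
Qed.

Lemma hdw_restrict g lo hi lo' hi' t d : has_deriv_within g lo hi t d ->
  lo <= lo' -> hi' <= hi -> has_deriv_within g lo' hi' t d.
Proof.
  intros H H1 H2 eps Heps. destruct (H eps Heps) as [del [Hd Hq]]. exists del; split; auto.
  intros h Hh Hh2 Hh3. apply Hq; auto; lra.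
Qed.

Lemma dpl_hdw g t d lo hi : derivable_pt_lim g t d -> has_deriv_within g lo hi t d.
Proof.
  intros H eps Heps. destruct (H eps Heps) as [del Hq]. exists del. split; [apply cond_pos|].
  intros h Hh Hh2 _. apply Hq; auto.
Qed.

Lemma hdw_plus g1 g2 lo hi t d1 d2 : has_deriv_within g1 lo hi t d1 -> has_deriv_within g2 lo hi t d2 ->
  has_deriv_within (fun s => g1 s + g2 s) lo hi t (d1 + d2).
Proof.
  intros H1 H2 eps Heps. destruct (H1 (eps/2)) as [e1 [He1 Q1]]; [lra|].
  destruct (H2 (eps/2)) as [e2 [He2 Q2]]; [lra|].
  exists (Rmin e1 e2); split; [apply Rmin_pos; auto|].
  intros h Hh Hh2 Hh3.
  assert (A1 := Q1 h Hh (Rlt_le_trans _ _ _ Hh2 (Rmin_l _ _)) Hh3).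
  assert (A2 := Q2 h Hh (Rlt_le_trans _ _ _ Hh2 (Rmin_r _ _)) Hh3).
  replace ((g1 (t + h) + g2 (t + h) - (g1 t + g2 t)) / h - (d1 + d2)) with
    (((g1 (t + h) - g1 t) / h - d1) + ((g2 (t + h) - g2 t) / h - d2)) by (field; auto).
  eapply Rle_lt_trans; [apply Rabs_triang|]. lra.
Qed.

Lemma hdw_scal c g lo hi t d : has_deriv_within g lo hi t d ->
  has_deriv_within (fun s => c * g s) lo hi t (c * d).
Proof.
  intros H eps Heps. destruct (H (eps / (Rabs c + 1))) as [e [He Q]].
  { apply Rdiv_lt_0_compat; [lra|]. pose proof (Rabs_pos c); lra. }
  exists e; split; auto. intros h Hh Hh2 Hh3. specialize (Q h Hh Hh2 Hh3).
  replace ((c * g (t + h) - c * g t) / h - c * d) with (c * ((g (t + h) - g t) / h - d)) by (field; auto).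
  rewrite Rabs_mult.
  assert (Hpos : 0 < Rabs c + 1) by (pose proof (Rabs_pos c); lra).
  apply Rle_lt_trans with ((Rabs c + 1) * Rabs ((g (t + h) - g t) / h - d)).
  { apply Rmult_le_compat_r; [apply Rabs_pos|lra]. }
  apply Rlt_le_trans with ((Rabs c + 1) * (eps / (Rabs c + 1))).
  { apply Rmult_lt_compat_l; auto. }
  right; field; lra.
Qed.

Lemma hdw_mult g1 g2 lo hi t d1 d2 : has_deriv_within g1 lo hi t d1 -> has_deriv_within g2 lo hi t d2 ->
  has_deriv_within (fun s => g1 s * g2 s) lo hi t (d1 * g2 t + g1 t * d2).
Proof.
  intros H1 H2 eps Heps.
  set (M := Rabs (g2 t) + 1).
  assert (HM : 0 < M) by (unfold M; pose proof (Rabs_pos (g2 t)); lra).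
  assert (Hg1 : 0 < Rabs (g1 t) + 1) by (pose proof (Rabs_pos (g1 t)); lra).
  assert (Hd1 : 0 < Rabs d1 + 1) by (pose proof (Rabs_pos d1); lra).
  destruct (H1 (eps/(3*M))) as [e1 [He1 Q1]]; [apply Rdiv_lt_0_compat; lra|].
  destruct (H2 (eps/(3*(Rabs (g1 t) + 1)))) as [e2 [He2 Q2]]; [apply Rdiv_lt_0_compat; lra|].
  destruct (hdw_cont _ _ _ _ _ H2 (Rmin 1 (eps/(3*(Rabs d1 + 1))))) as [e3 [He3 Q3]].
  { apply Rmin_pos; [lra|apply Rdiv_lt_0_compat; lra]. }
  exists (Rmin e1 (Rmin e2 e3)); split; [repeat apply Rmin_pos; auto|].
  intros h Hh Hh2 Hh3.
  assert (h1 : Rabs h < e1) by (eapply Rlt_le_trans; [exact Hh2|apply Rmin_l]).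
  assert (h2 : Rabs h < e2) by (eapply Rlt_le_trans; [exact Hh2|]; eapply Rle_trans; [apply Rmin_r|apply Rmin_l]).
  assert (h3 : Rabs h < e3) by (eapply Rlt_le_trans; [exact Hh2|]; eapply Rle_trans; [apply Rmin_r|apply Rmin_r]).
  specialize (Q1 h Hh h1 Hh3). specialize (Q2 h Hh h2 Hh3).
  assert (Q3' : Rabs (g2 (t + h) - g2 t) < Rmin 1 (eps/(3*(Rabs d1 + 1)))).
  { apply Q3; auto. replace (t + h - t) with h by ring; auto. }
  set (q1 := (g1 (t + h) - g1 t) / h - d1) in *.
  set (q2 := (g2 (t + h) - g2 t) / h - d2) in *.
  set (w := g2 (t + h) - g2 t) in *.
  replace ((g1 (t + h) * g2 (t + h) - g1 t * g2 t) / h - (d1 * g2 t + g1 t * d2))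
    with (q1 * g2 (t + h) + d1 * w + g1 t * q2) by (unfold q1, q2, w; field; auto).
  assert (Hw1 : Rabs w < 1) by (eapply Rlt_le_trans; [exact Q3'|apply Rmin_l]).
  assert (Hw2 : Rabs w < eps/(3*(Rabs d1 + 1))) by (eapply Rlt_le_trans; [exact Q3'|apply Rmin_r]).
  assert (Hg2 : Rabs (g2 (t + h)) <= M).
  { unfold M. replace (g2 (t + h)) with (w + g2 t) by (unfold w; ring).
    eapply Rle_trans; [apply Rabs_triang|]. lra. }
  assert (T1 : Rabs (q1 * g2 (t + h)) <= eps / 3).
  { rewrite Rabs_mult. apply Rle_trans with (eps / (3 * M) * M).
    { apply Rmult_le_compat; try apply Rabs_pos; lra. }
    right; field; lra. }
  assert (T2 : Rabs (d1 * w) <= eps / 3).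
  { rewrite Rabs_mult. apply Rle_trans with ((Rabs d1 + 1) * (eps / (3 * (Rabs d1 + 1)))).
    { apply Rmult_le_compat; try apply Rabs_pos; lra. }
    right; field; lra. }
  assert (T3 : Rabs (g1 t * q2) < eps / 3).
  { rewrite Rabs_mult. apply Rle_lt_trans with ((Rabs (g1 t) + 1) * Rabs q2).
    { apply Rmult_le_compat_r; [apply Rabs_pos|lra]. }
    apply Rlt_le_trans with ((Rabs (g1 t) + 1) * (eps / (3 * (Rabs (g1 t) + 1)))).
    { apply Rmult_lt_compat_l; auto. }
    right; field; lra. }
  eapply Rle_lt_trans; [apply Rabs_triang|].
  eapply Rle_lt_trans; [apply Rplus_le_compat_r; apply Rabs_triang|]. lra.
Qed.

Lemma hdw_ext g1 g2 lo hi t d : has_deriv_within g1 lo hi t d ->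
  (forall s, lo <= s <= hi -> g1 s = g2 s) -> lo <= t <= hi -> has_deriv_within g2 lo hi t d.
Proof.
  intros H E Ht eps Heps. destruct (H eps Heps) as [e [He Q]]. exists e; split; auto.
  intros h Hh Hh2 Hh3. rewrite <- (E (t+h)), <- (E t); auto.
Qed.

Lemma hdw_deq g lo hi t d1 d2 : has_deriv_within g lo hi t d1 -> d1 = d2 -> has_deriv_within g lo hi t d2.
Proof. intros H ->; auto. Qed.

Lemma eps_le x y c : 0 <= c -> (forall e, 0 < e -> x <= y + e * c + e) -> x <= y.
Proof.
  intros Hc H. destruct (Rle_dec x y) as [|Hn]; auto. exfalso.
  set (e := (x - y) / (2 * (c + 1))).
  assert (He : 0 < e) by (unfold e; apply Rdiv_lt_0_compat; lra).
  specialize (H e He).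
  assert (e * c + e = (x - y) / 2) by (unfold e; field; lra). lra.
Qed.

Lemma mono_le h dd lo hi : lo <= hi ->
  (forall t, lo <= t <= hi -> has_deriv_within h lo hi t (dd t)) ->
  (forall t, lo < t < hi -> dd t <= 0) -> h hi <= h lo.
Proof.
  intros Hle Hd Hneg. apply (eps_le _ _ (hi - lo)); [lra|]. intros e He.
  set (P := fun u => h u <= h lo + e * (u - lo) + e).
  assert (HP : forall t, lo <= t <= hi -> P t).
  { apply real_ind; auto.
    - intros t Ht Hb. unfold P. destruct (Req_dec t lo) as [->|Hne]; [lra|].
      destruct (Rle_dec (h t) (h lo + e * (t - lo) + e)) as [|Hn]; auto. exfalso.
      set (gap := h t - (h lo + e * (t - lo) + e)).
      assert (Hgap : 0 < gap) by (unfold gap; lra).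
      destruct (hdw_cont _ _ _ _ _ (Hd t Ht) (gap/2)) as [del [Hdel Hc]]; [lra|].
      set (u := Rmax lo (t - del/2)).
      assert (Hu1 : lo <= u < t) by (unfold u, Rmax; destruct (Rle_dec lo (t - del/2)); lra).
      assert (Hu2 : Rabs (u - t) < del).
      { rewrite Rabs_left by lra. unfold u, Rmax; destruct (Rle_dec lo (t - del/2)); lra. }
      specialize (Hc u ltac:(lra) Hu2). specialize (Hb u Hu1). unfold P in Hb.
      apply Rabs_def2 in Hc. assert (e * (u - lo) <= e * (t - lo)) by (apply Rmult_le_compat_l; lra).
      unfold gap in *. lra.
    - intros t Ht Hb. destruct (Req_dec t lo) as [->|Hne].
      + destruct (hdw_cont _ _ _ _ _ (Hd lo ltac:(lra)) e He) as [del [Hdel Hc]].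
        exists del; split; auto. intros u Hu1 Hu2. unfold P.
        assert (Hx : Rabs (h u - h lo) < e) by (apply Hc; [lra|rewrite Rabs_right; lra]).
        apply Rabs_def2 in Hx. assert (0 <= e * (u - lo)) by (apply Rmult_le_pos; lra). lra.
      + destruct (Hd t ltac:(lra) e He) as [del [Hdel Hq]].
        exists del; split; auto. intros u Hu1 Hu2.
        specialize (Hq (u - t) ltac:(lra) ltac:(rewrite Rabs_right; lra)).
        replace (t + (u - t)) with u in Hq by ring. specialize (Hq ltac:(lra)).
        specialize (Hneg t ltac:(lra)). specialize (Hb t ltac:(lra)). unfold P in *.
        apply Rabs_def2 in Hq. destruct Hq as [Hq _].
        assert (Hq2 : (h u - h t) / (u - t) < e) by lra.
        assert (h u - h t < e * (u - t)).
        { apply (Rmult_lt_compat_r (u - t)) in Hq2; [|lra].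
          replace ((h u - h t) / (u - t) * (u - t)) with (h u - h t) in Hq2 by (field; lra). lra. }
        lra. }
  specialize (HP hi ltac:(lra)). unfold P in HP. lra.
Qed.


Definition FS (g : Z -> R) (lo : Z) (s n : nat) : R :=
  fold_right (fun i acc => g (lo + Z.of_nat i)%Z + acc) 0 (seq s n).
Definition FP (g : Z -> R) (lo : Z) (s n : nat) : R :=
  fold_right (fun i acc => g (lo + Z.of_nat i)%Z * acc) 1 (seq s n).

Lemma FS_shift g lo s n : FS g lo (S s) n = FS g (lo + 1)%Z s n.
Proof.
  revert s; induction n; intros s; simpl; auto. unfold FS in *; simpl. rewrite IHn.
  f_equal. f_equal. lia.
Qed.
Lemma FP_shift g lo s n : FP g lo (S s) n = FP g (lo + 1)%Z s n.
Proof.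
  revert s; induction n; intros s; simpl; auto. unfold FP in *; simpl. rewrite IHn.
  f_equal. f_equal. lia.
Qed.
Lemma FS_S g lo n : FS g lo 0 (S n) = g lo + FS g (lo + 1)%Z 0 n.
Proof. unfold FS at 1; simpl. rewrite Z.add_0_r. f_equal. apply FS_shift. Qed.
Lemma FP_S g lo n : FP g lo 0 (S n) = g lo * FP g (lo + 1)%Z 0 n.
Proof. unfold FP at 1; simpl. rewrite Z.add_0_r. f_equal. apply FP_shift. Qed.
Lemma FS_app g lo n1 n2 : FS g lo 0 (n1 + n2) = FS g lo 0 n1 + FS g (lo + Z.of_nat n1)%Z 0 n2.
Proof.
  revert lo; induction n1; intros lo; simpl.
  - rewrite Z.add_0_r. unfold FS; simpl; ring.
  - change (S (n1 + n2)) with (S n1 + n2)%nat. rewrite FS_S.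
    change (FS g lo 0 (S n1 + n2)) with (FS g lo 0 (S (n1 + n2))).
    rewrite FS_S, IHn1. replace (lo + 1 + Z.of_nat n1)%Z with (lo + Z.pos (Pos.of_succ_nat n1))%Z by lia.
    ring.
Qed.
Lemma FP_app g lo n1 n2 : FP g lo 0 (n1 + n2) = FP g lo 0 n1 * FP g (lo + Z.of_nat n1)%Z 0 n2.
Proof.
  revert lo; induction n1; intros lo; simpl.
  - rewrite Z.add_0_r. unfold FP; simpl; ring.
  - change (FP g lo 0 (S (n1 + n2))) with (FP g lo 0 (S (n1 + n2))).
    rewrite !FP_S, IHn1. replace (lo + 1 + Z.of_nat n1)%Z with (lo + Z.pos (Pos.of_succ_nat n1))%Z by lia.
    ring.
Qed.

Lemma sumZ_FS lo hi g : sumZ lo hi g = FS g lo 0 (Z.to_nat (hi - lo + 1)).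
Proof. reflexivity. Qed.
Lemma prodZ_FP lo hi g : prodZ lo hi g = FP g lo 0 (Z.to_nat (hi - lo + 1)).
Proof. reflexivity. Qed.

Lemma sumZ_empty lo hi g : (hi < lo)%Z -> sumZ lo hi g = 0.
Proof. intros H. rewrite sumZ_FS. replace (Z.to_nat (hi - lo + 1)) with 0%nat by lia. reflexivity. Qed.
Lemma prodZ_empty lo hi g : (hi < lo)%Z -> prodZ lo hi g = 1.
Proof. intros H. rewrite prodZ_FP. replace (Z.to_nat (hi - lo + 1)) with 0%nat by lia. reflexivity. Qed.

Lemma sumZ_cons lo hi g : (lo <= hi)%Z -> sumZ lo hi g = g lo + sumZ (lo + 1) hi g.
Proof.
  intros H. rewrite !sumZ_FS. replace (Z.to_nat (hi - lo + 1)) with (S (Z.to_nat (hi - (lo + 1) + 1))) by lia.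
  apply FS_S.
Qed.
Lemma sumZ_snoc lo hi g : (lo <= hi + 1)%Z -> sumZ lo (hi + 1) g = sumZ lo hi g + g (hi + 1)%Z.
Proof.
  intros H. rewrite !sumZ_FS. replace (Z.to_nat (hi + 1 - lo + 1)) with (Z.to_nat (hi - lo + 1) + 1)%nat by lia.
  rewrite FS_app. f_equal. change 1%nat with (S 0). rewrite FS_S. unfold FS; simpl.
  rewrite Rplus_0_r. f_equal. lia.
Qed.
Lemma prodZ_split lo mid hi g : (lo <= mid)%Z -> (mid <= hi + 1)%Z ->
  prodZ lo hi g = prodZ lo (mid - 1) g * prodZ mid hi g.
Proof.
  intros H1 H2. rewrite !prodZ_FP.
  replace (Z.to_nat (hi - lo + 1)) with (Z.to_nat (mid - 1 - lo + 1) + Z.to_nat (hi - mid + 1))%nat by lia.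
  rewrite FP_app. f_equal. f_equal. lia.
Qed.
Lemma prodZ_snoc lo hi g : (lo <= hi + 1)%Z -> prodZ lo (hi + 1) g = prodZ lo hi g * g (hi + 1)%Z.
Proof.
  intros H. rewrite (prodZ_split lo (hi + 1) (hi + 1)) by lia.
  replace (hi + 1 - 1)%Z with hi by lia. f_equal.
  rewrite prodZ_FP. replace (Z.to_nat (hi + 1 - (hi + 1) + 1)) with 1%nat by lia.
  unfold FP; simpl. rewrite Z.add_0_r; ring.
Qed.
Lemma prodZ_nz lo hi g : (forall k, g k <> 0) -> prodZ lo hi g <> 0.
Proof.
  intros H. rewrite prodZ_FP. generalize (Z.to_nat (hi - lo + 1)). intros n. revert lo.
  induction n; intros lo. { unfold FP; simpl; lra. }
  rewrite FP_S. apply Rmult_integral_contrapositive; split; auto.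
Qed.

Lemma th_mono (th : Z -> R) : (forall k, th k < th (k + 1)%Z) ->
  forall i j, (i < j)%Z -> th i < th j.
Proof.
  intros H i j Hij. replace j with (i + Z.of_nat (S (Z.to_nat (j - i - 1))))%Z by lia.
  generalize (Z.to_nat (j - i - 1)). intros n. induction n.
  - replace (i + Z.of_nat 1)%Z with (i + 1)%Z by lia. auto.
  - eapply Rlt_trans; [exact IHn|]. replace (i + Z.of_nat (S (S n)))%Z with ((i + Z.of_nat (S n)) + 1)%Z by lia.
    auto.
Qed.
Lemma th_mono_le (th : Z -> R) : (forall k, th k < th (k + 1)%Z) ->
  forall i j, (i <= j)%Z -> th i <= th j.
Proof.
  intros H i j Hij. destruct (Z.eq_dec i j) as [->|]; [lra|]. left; apply th_mono; auto; lia.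
Qed.

Lemma sk_step th k : s_k th k - s_k th (k - 1) = eta_k th k.
Proof.
  unfold s_k, eta_k.
  destruct (Z_lt_le_dec k 0) as [Hk|Hk].
  - replace (0 <=? k)%Z with false by (symmetry; apply Z.leb_gt; lia).
    replace (0 <=? k - 1)%Z with false by (symmetry; apply Z.leb_gt; lia).
    rewrite (sumZ_cons (k - 1) (-1)) by lia. replace (k - 1 + 1)%Z with k by lia.
    unfold delta_k. replace (2 * (k - 1) + 1)%Z with (2 * k - 1)%Z by lia. ring.
  - replace (0 <=? k)%Z with true by (symmetry; apply Z.leb_le; lia).
    destruct (Z.eq_dec k 0) as [->|Hne].
    + simpl. rewrite sumZ_empty by lia. rewrite sumZ_cons by lia. rewrite sumZ_empty by lia.
      unfold delta_k. simpl. ring.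
    + replace (0 <=? k - 1)%Z with true by (symmetry; apply Z.leb_le; lia).
      replace (sumZ 0 (k - 1) (delta_k th)) with (sumZ 0 (k - 1 - 1 + 1) (delta_k th)) by (f_equal; lia).
      rewrite sumZ_snoc by lia. replace (k - 1 - 1 + 1)%Z with (k - 1)%Z by lia.
      unfold delta_k. replace (2 * (k - 1) + 1)%Z with (2 * k - 1)%Z by lia.
      replace (k - 1 - 1)%Z with (k - 2)%Z by lia. ring.
Qed.


Section TS.
Variable th : Z -> R.
Variable omega : R.
Variable p : nat.
Hypothesis Hinc : forall k, th k < th (k + 1)%Z.
Hypothesis Hp : (1 <= p)%nat.
Hypothesis Hper : forall k, th (k + 2 * Z.of_nat p)%Z = th k + omega.

Lemma eta_pos k : 0 < eta_k th k.
Proof. unfold eta_k. pose proof (Hinc (2 * k - 1)%Z). replace (2 * k - 1 + 1)%Z with (2 * k)%Z in H by lia. lra. Qed.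
Lemma delta_pos k : 0 < delta_k th k.
Proof. unfold delta_k. pose proof (Hinc (2 * k)%Z). lra. Qed.

Lemma sk_mono i j : (i < j)%Z -> s_k th i < s_k th j.
Proof.
  intros Hij. replace j with (i + Z.of_nat (S (Z.to_nat (j - i - 1))))%Z by lia.
  generalize (Z.to_nat (j - i - 1)). intros n. induction n.
  - pose proof (sk_step th (i + Z.of_nat 1)). pose proof (eta_pos (i + Z.of_nat 1)).
    replace (i + Z.of_nat 1 - 1)%Z with i in H by lia. lra.
  - pose proof (sk_step th (i + Z.of_nat (S (S n)))). pose proof (eta_pos (i + Z.of_nat (S (S n)))).
    replace (i + Z.of_nat (S (S n)) - 1)%Z with (i + Z.of_nat (S n))%Z in H by lia. lra.
Qed.
Lemma sk_mono_le i j : (i <= j)%Z -> s_k th i <= s_k th j.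
Proof. intros H. destruct (Z.eq_dec i j) as [->|]; [lra|left; apply sk_mono; lia]. Qed.

Lemma eta_per k : eta_k th (k + Z.of_nat p) = eta_k th k.
Proof.
  unfold eta_k. replace (2 * (k + Z.of_nat p))%Z with (2 * k + 2 * Z.of_nat p)%Z by lia.
  replace (2 * k + 2 * Z.of_nat p - 1)%Z with (2 * k - 1 + 2 * Z.of_nat p)%Z by lia.
  rewrite !Hper. ring.
Qed.
Lemma delta_per k : delta_k th (k + Z.of_nat p) = delta_k th k.
Proof.
  unfold delta_k. replace (2 * (k + Z.of_nat p))%Z with (2 * k + 2 * Z.of_nat p)%Z by lia.
  replace (2 * k + 2 * Z.of_nat p + 1)%Z with (2 * k + 1 + 2 * Z.of_nat p)%Z by lia.
  rewrite !Hper. ring.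
Qed.
Lemma delta_per_m k (q : Z) : delta_k th (k + q * Z.of_nat p) = delta_k th k.
Proof.
  induction q using Z.peano_ind.
  - f_equal; lia.
  - replace (k + Z.succ q * Z.of_nat p)%Z with (k + q * Z.of_nat p + Z.of_nat p)%Z by lia.
    rewrite delta_per; auto.
  - rewrite <- IHq. replace (k + q * Z.of_nat p)%Z with (k + Z.pred q * Z.of_nat p + Z.of_nat p)%Z by lia.
    rewrite delta_per; auto.
Qed.

Lemma psi_tel (n : nat) : sumZ 1 (Z.of_nat n) (eta_k th) = s_k th (Z.of_nat n) - s_k th 0.
Proof.
  induction n.
  - rewrite sumZ_empty by lia. simpl; ring.
  - replace (Z.of_nat (S n)) with (Z.of_nat n + 1)%Z by lia.
    rewrite sumZ_snoc by lia. rewrite IHn. pose proof (sk_step th (Z.of_nat n + 1)).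
    replace (Z.of_nat n + 1 - 1)%Z with (Z.of_nat n) in H by lia. lra.
Qed.

Lemma sk_per k : s_k th (k + Z.of_nat p) - s_k th k = psi_omega th p.
Proof.
  unfold psi_omega. rewrite psi_tel. simpl.
  induction k using Z.peano_ind.
  - f_equal.
  - pose proof (sk_step th (Z.succ k + Z.of_nat p)). pose proof (sk_step th (Z.succ k)).
    replace (Z.succ k + Z.of_nat p - 1)%Z with (k + Z.of_nat p)%Z in H by lia.
    replace (Z.succ k - 1)%Z with k in H0 by lia.
    rewrite (Z.add_comm (Z.succ k)) in H. rewrite Z.add_comm in H. rewrite eta_per in H. lra.
  - pose proof (sk_step th (k + Z.of_nat p)). pose proof (sk_step th k).
    replace (k + Z.of_nat p - 1)%Z with (Z.pred k + Z.of_nat p)%Z in H by lia.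
    replace (k - 1)%Z with (Z.pred k) in H0 by lia.
    rewrite eta_per in H. lra.
Qed.

Lemma psi_pos : 0 < psi_omega th p.
Proof.
  pose proof (sk_per 0). pose proof (sk_mono 0 (0 + Z.of_nat p) ltac:(lia)). lra.
Qed.

Lemma delta_le_max k : delta_k th k <= delta_max th p.
Proof.
  set (r := ((k - 1) mod Z.of_nat p + 1)%Z).
  assert (Hr : (1 <= r <= Z.of_nat p)%Z).
  { unfold r. pose proof (Z.mod_pos_bound (k - 1) (Z.of_nat p)). lia. }
  assert (Hk : k = (r + ((k - 1) / Z.of_nat p) * Z.of_nat p)%Z).
  { unfold r. pose proof (Z.div_mod (k - 1) (Z.of_nat p)). lia. }
  rewrite Hk, delta_per_m.
  unfold delta_max.
  assert (Hin : In (Z.to_nat r) (seq 1 p)) by (apply in_seq; lia).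
  replace r with (Z.of_nat (Z.to_nat r)) by lia.
  revert Hin. generalize (Z.to_nat r). intros q Hq. clear Hk Hr. induction (seq 1 p); simpl in *; [tauto|].
  destruct Hq as [->|Hq]; [apply Rmax_l|]. eapply Rle_trans; [apply IHl; auto|apply Rmax_r].
Qed.

Lemma deltamax_pos : 0 < delta_max th p.
Proof. pose proof (delta_le_max 0). pose proof (delta_pos 0). lra. Qed.

Lemma sk_lower (l : Z) (m : nat) :
  s_k th (l + Z.of_nat m) - s_k th l >= (INR m / INR p - 1) * psi_omega th p.
Proof.
  pose proof psi_pos as Hps.
  set (q := (m / p)%nat). set (rr := (m mod p)%nat).
  assert (Hm : m = (q * p + rr)%nat) by (unfold q, rr; rewrite Nat.mul_comm; apply Nat.div_mod; lia).
  assert (Hrr : (rr < p)%nat) by (unfold rr; apply Nat.mod_upper_bound; lia).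
  assert (Hq : forall q0 : nat, s_k th (l + Z.of_nat (q0 * p)) - s_k th l = INR q0 * psi_omega th p).
  { induction q0. { simpl. replace (l + 0)%Z with l by lia. ring. }
    pose proof (sk_per (l + Z.of_nat (q0 * p))).
    replace (l + Z.of_nat (q0 * p) + Z.of_nat p)%Z with (l + Z.of_nat (S q0 * p))%Z in H by lia.
    rewrite S_INR. lra. }
  assert (H1 : s_k th (l + Z.of_nat (q * p)) <= s_k th (l + Z.of_nat m)) by (apply sk_mono_le; lia).
  pose proof (Hq q).
  assert (INR m / INR p - 1 <= INR q).
  { assert (0 < INR p) by (apply lt_0_INR; lia).
    apply Rmult_le_reg_r with (INR p); auto.
    replace ((INR m / INR p - 1) * INR p) with (INR m - INR p) by (field; lra).
    rewrite Hm, plus_INR, mult_INR. apply lt_INR in Hrr. lra. }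
  apply Rle_ge. apply Rle_trans with (INR q * psi_omega th p); [|lra].
  apply Rmult_le_compat_r; lra.
Qed.
End TS.


Lemma In_cells m n h l : In (h, l) (cells m n) -> in_cell m n h l.
Proof.
  unfold cells, in_cell. intros H. apply in_flat_map in H. destruct H as [i [Hi Hin]].
  apply in_map_iff in Hin. destruct Hin as [j [Heq Hj]]. inversion Heq; subst.
  apply in_seq in Hi. apply in_seq in Hj. lia.
Qed.
Lemma cells_In m n h l : in_cell m n h l -> In (h, l) (cells m n).
Proof.
  unfold cells, in_cell. intros H. apply in_flat_map. exists h. split; [apply in_seq; lia|].
  apply in_map_iff. exists l. split; auto. apply in_seq; lia.
Qed.

Lemma cellmax_ge m n g i j : in_cell m n i j -> g i j <= cellmax m n g.
Proof.
  intros H. apply cells_In in H. unfold cellmax. induction (cells m n); simpl in *; [tauto|].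
  destruct H as [->|H]; simpl; [apply Rmax_l|]. eapply Rle_trans; [apply IHl; auto|apply Rmax_r].
Qed.
Lemma cellmax_lt m n g b : (1 <= m)%nat -> (1 <= n)%nat ->
  (forall i j, in_cell m n i j -> g i j < b) -> cellmax m n g < b.
Proof.
  intros Hm Hn H. unfold cellmax.
  assert (forall c, In c (cells m n) -> g (fst c) (snd c) < b).
  { intros [h l] Hc. apply H. apply In_cells; auto. }
  induction (cells m n); simpl. { apply H. unfold in_cell; lia. }
  unfold Rmax. destruct (Rle_dec _ _). { apply IHl; intros; apply H0; simpl; auto. }
  apply H0; simpl; auto.
Qed.
Lemma cellmax_le m n g b : (1 <= m)%nat -> (1 <= n)%nat ->
  (forall i j, in_cell m n i j -> g i j <= b) -> cellmax m n g <= b.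
Proof.
  intros Hm Hn H. unfold cellmax.
  assert (forall c, In c (cells m n) -> g (fst c) (snd c) <= b).
  { intros [h l] Hc. apply H. apply In_cells; auto. }
  induction (cells m n); simpl. { apply H. unfold in_cell; lia. }
  unfold Rmax. destruct (Rle_dec _ _). { apply IHl; intros; apply H0; simpl; auto. }
  apply H0; simpl; auto.
Qed.
Lemma cellmin_le m n g i j : in_cell m n i j -> cellmin m n g <= g i j.
Proof.
  intros H. apply cells_In in H. unfold cellmin. induction (cells m n); simpl in *; [tauto|].
  destruct H as [->|H]; simpl; [apply Rmin_l|]. eapply Rle_trans; [apply Rmin_r|apply IHl; auto].
Qed.

Definition nbl (r i j : nat) (L : list (nat * nat)) (g : nat -> nat -> R) : R :=
  fold_right (fun c acc =>
    (if andb (Nat.leb (natdist (fst c) i) r) (Nat.leb (natdist (snd c) j) r)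
     then g (fst c) (snd c) else 0) + acc) 0 L.

Lemma nbsum_nbl m n r i j g : nbsum m n r i j g = nbl r i j (cells m n) g.
Proof. reflexivity. Qed.

Lemma nbsum_lin m n r i j g1 g2 w1 w2 :
  nbsum m n r i j g1 * w1 - nbsum m n r i j g2 * w2 =
  nbsum m n r i j (fun h l => g1 h l * w1 - g2 h l * w2).
Proof.
  rewrite !nbsum_nbl. induction (cells m n); simpl; [ring|].
  destruct (_ && _)%bool; rewrite <- IHl; ring.
Qed.
Lemma nbsum_mulr m n r i j g c :
  nbsum m n r i j (fun h l => g h l * c) = nbsum m n r i j g * c.
Proof.
  rewrite !nbsum_nbl. induction (cells m n); simpl; [ring|].
  destruct (_ && _)%bool; rewrite IHl; ring.
Qed.
Lemma nbsum_abs m n r i j g1 g2 :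
  (forall h l, in_cell m n h l -> Rabs (g1 h l) <= g2 h l) ->
  Rabs (nbsum m n r i j g1) <= nbsum m n r i j g2.
Proof.
  intros H. rewrite !nbsum_nbl.
  assert (forall c, In c (cells m n) -> Rabs (g1 (fst c) (snd c)) <= g2 (fst c) (snd c)).
  { intros [h l] Hc. apply H. apply In_cells; auto. }
  induction (cells m n); simpl; [rewrite Rabs_R0; lra|].
  eapply Rle_trans; [apply Rabs_triang|].
  apply Rplus_le_compat; [|apply IHl; intros; apply H0; simpl; auto].
  destruct (_ && _)%bool; [apply H0; simpl; auto|]. rewrite Rabs_R0; lra.
Qed.
Lemma nbl_zero r i j L : nbl r i j L (fun _ _ => 0) = 0.
Proof. induction L as [|c L IH]; simpl; [reflexivity|]. rewrite IH. destruct (_ && _)%bool; ring. Qed.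
Lemma nbsum_nonneg m n r i j g :
  (forall h l, in_cell m n h l -> 0 <= g h l) -> 0 <= nbsum m n r i j g.
Proof.
  intros H. pose proof (nbsum_abs m n r i j (fun _ _ => 0) g).
  rewrite nbsum_nbl in H0. rewrite nbl_zero, Rabs_R0 in H0. apply H0. intros h l Hc. try rewrite Rabs_R0; auto.
Qed.


Lemma lin_dpl c b w : derivable_pt_lim (fun t => c * t + b) w c.
Proof.
  intros eps Heps. exists (mkposreal 1 Rlt_0_1). intros h Hh _.
  replace ((c * (w + h) + b - (c * w + b)) / h - c) with 0 by (field; auto).
  rewrite Rabs_R0; auto.
Qed.
Lemma expl_dpl c b w : derivable_pt_lim (fun t => exp (c * t + b)) w (c * exp (c * w + b)).
Proof.
  pose proof (derivable_pt_lim_comp (fun t => c * t + b) exp w c (exp (c * w + b)) (lin_dpl c b w)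
    (derivable_pt_lim_exp _)). unfold comp in H. rewrite Rmult_comm. exact H.
Qed.
Lemma dpl_cont g w d : derivable_pt_lim g w d ->
  forall eps, 0 < eps -> exists del, 0 < del /\ forall u, Rabs (u - w) < del -> Rabs (g u - g w) < eps.
Proof.
  intros H eps Heps. pose proof (dpl_hdw g w d (w - 1) (w + 1) H) as H1.
  destruct (hdw_cont _ _ _ _ _ H1 eps Heps) as [del [Hd Q]].
  exists (Rmin del 1); split; [apply Rmin_pos; lra|]. intros u Hu.
  apply Q. { assert (Rabs (u - w) < 1) by (eapply Rlt_le_trans; [exact Hu|apply Rmin_r]).
    apply Rabs_def2 in H0; lra. }
  eapply Rlt_le_trans; [exact Hu|apply Rmin_l].
Qed.

Lemma closure_le (F : R -> R) A B : A < B ->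
  (forall w eps, 0 < eps -> exists del, 0 < del /\ forall u, Rabs (u - w) < del -> Rabs (F u - F w) < eps) ->
  (forall w, A < w < B -> F w <= 0) -> forall w, A <= w <= B -> F w <= 0.
Proof.
  intros HAB Hc H w Hw. destruct (Rle_dec (F w) 0) as [|Hn]; auto. exfalso.
  destruct (Hc w (F w) ltac:(lra)) as [del [Hd Q]].
  set (e := Rmin (del / 2) ((B - A) / 2)).
  assert (He1 : 0 < e) by (apply Rmin_pos; lra).
  assert (He2 : e <= del / 2) by apply Rmin_l.
  assert (He3 : e <= (B - A) / 2) by apply Rmin_r.
  assert (Hex : exists u, A < u < B /\ Rabs (u - w) < del).
  { destruct (Req_dec w A) as [->|HA].
    - exists (A + e). split; [lra|]. rewrite Rabs_right; lra.
    - destruct (Req_dec w B) as [->|HB].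
      + exists (B - e). split; [lra|]. rewrite Rabs_left; lra.
      + exists w. split; [lra|]. rewrite Rminus_diag, Rabs_R0; lra. }
  destruct Hex as [u [Hu1 Hu2]]. specialize (Q u Hu2). specialize (H u Hu1).
  apply Rabs_def2 in Q. lra.
Qed.

Lemma fin_cells m n (Q : nat -> nat -> R -> Prop) :
  (forall i j d d', Q i j d -> 0 < d' <= d -> Q i j d') ->
  (forall i j, in_cell m n i j -> exists d, 0 < d /\ Q i j d) ->
  exists d, 0 < d /\ forall i j, in_cell m n i j -> Q i j d.
Proof.
  intros Hmon H.
  assert (forall L : list (nat * nat), (forall c, In c L -> in_cell m n (fst c) (snd c)) ->
    exists d, 0 < d /\ forall c, In c L -> Q (fst c) (snd c) d).
  { induction L as [|c L IH]; intros HL.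
    - exists 1; split; [lra|]. intros c []. 
    - destruct (IH (fun c' Hc' => HL c' (or_intror Hc'))) as [d1 [Hd1 Q1]].
      destruct (H (fst c) (snd c) (HL c (or_introl eq_refl))) as [d2 [Hd2 Q2]].
      exists (Rmin d1 d2); split; [apply Rmin_pos; auto|].
      intros c' [<-|Hc'].
      + eapply Hmon; [exact Q2|split; [apply Rmin_pos; auto|apply Rmin_r]].
      + eapply Hmon; [apply Q1; auto|split; [apply Rmin_pos; auto|apply Rmin_l]]. }
  destruct (H0 (cells m n)) as [d [Hd Q1]].
  { intros [h l] Hc. apply In_cells; auto. }
  exists d; split; auto. intros i j Hij. apply (Q1 (i, j)). apply cells_In; auto.
Qed.


Section Main.
Variables (m n r : nat) (a : nat -> nat -> R) (C : nat -> nat -> nat -> nat -> R)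
  (f : R -> R) (th : Z -> R) (omega : R) (p : nat) (zeta : Z -> vec)
  (K : nat -> nat -> R) (Mf Lf MF : R) (phi x : R -> vec) (t0 : R) (l0 : Z).
Hypothesis Hm : (1 <= m)%nat.
Hypothesis Hn : (1 <= n)%nat.
Hypothesis Ha : forall i j, in_cell m n i j -> 0 < a i j.
Hypothesis HC : forall i j h l, in_cell m n i j -> in_cell m n h l -> 0 <= C i j h l.
Hypothesis Hinc : forall k, th k < th (k + 1)%Z.
Hypothesis Hp : (1 <= p)%nat.
Hypothesis Hper : forall k, th (k + 2 * Z.of_nat p)%Z = th k + omega.
Hypothesis HC1 : forall i j k, in_cell m n i j -> delta_k th k * a i j <> 1.
Hypothesis HK : forall i j, in_cell m n i j -> 0 < K i j.
Hypothesis HKu : forall i j (l k : Z) (s tau : R), in_cell m n i j ->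
     s_k th (l - 1)%Z < tau <= s_k th l -> s_k th k < s <= s_k th (k + 1)%Z -> tau <= s ->
     Rabs (ufun th a i j l k s tau) <= K i j * exp (- lam_ij th p a i j * (s - tau)).

Notation sg := (s_k th).
Notation lij := (lam_ij th p a).
Definition PR i j (l k : Z) := prodZ l k (fun nu => 1 - delta_k th nu * a i j).

Lemma PR_nz i j l k : in_cell m n i j -> PR i j l k <> 0.
Proof. intros H. apply prodZ_nz. intros nu. specialize (HC1 i j nu H). lra. Qed.

Lemma Kcl i j l k tau s : in_cell m n i j -> (l <= k + 1)%Z ->
  sg (l - 1)%Z <= tau <= sg l -> sg k <= s <= sg (k + 1)%Z -> tau <= s ->
  Rabs (exp (- a i j * (s - tau)) * PR i j l k) <= K i j * exp (- lij i j * (s - tau)).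
Proof.
  intros Hc Hlk Htau Hs Hts.
  set (P := PR i j l k).
  set (F := fun w => Rabs P - K i j * exp ((a i j - lij i j) * w + 0)).
  set (A := Rmax 0 (sg k - sg l)). set (B := sg (k + 1)%Z - sg (l - 1)%Z).
  assert (Hmono := sk_mono th p Hinc Hp).
  assert (HAB : A < B).
  { unfold A, B, Rmax. destruct (Rle_dec 0 (sg k - sg l)).
    - pose proof (Hmono k (k+1)%Z ltac:(lia)). pose proof (Hmono (l-1)%Z l ltac:(lia)). lra.
    - pose proof (Hmono (l-1)%Z (k+1)%Z ltac:(lia)). lra. }
  assert (Hexp : forall w, exp (- a i j * w) * exp ((a i j - lij i j) * w + 0) = exp (- lij i j * w)).
  { intros w. rewrite <- exp_plus. f_equal. ring. }
  assert (Hopen : forall w, A < w < B -> F w <= 0).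
  { intros w Hw. unfold F.
    set (s' := Rmin (sg (k + 1)%Z) (sg l + w)). set (tau' := s' - w).
    assert (HA1 : 0 <= A) by apply Rmax_l. assert (HA2 : sg k - sg l <= A) by apply Rmax_r.
    assert (Hs' : sg k < s' <= sg (k + 1)%Z).
    { unfold s', Rmin. destruct (Rle_dec _ _); pose proof (Hmono k (k+1)%Z ltac:(lia)); lra. }
    assert (Ht' : sg (l - 1)%Z < tau' <= sg l).
    { unfold tau', s', Rmin. destruct (Rle_dec _ _); pose proof (Hmono (l-1)%Z l ltac:(lia)); unfold B in Hw; lra. }
    specialize (HKu i j l k s' tau' Hc Ht' Hs' ltac:(unfold tau'; lra)).
    unfold ufun in HKu. replace (s' - tau') with w in HKu by (unfold tau'; ring).
    rewrite Rabs_mult, Rabs_right in HKu by (left; apply exp_pos).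
    fold (PR i j l k) in HKu. fold P in HKu.
    rewrite <- (Hexp w) in HKu.
    assert (0 < exp (- a i j * w)) by apply exp_pos.
    apply Rmult_le_reg_l with (exp (- a i j * w)); auto. lra. }
  assert (Hcont : forall w eps, 0 < eps -> exists del, 0 < del /\ forall u, Rabs (u - w) < del -> Rabs (F u - F w) < eps).
  { intros w eps Heps.
    assert (HK0 : 0 < K i j + 1) by (pose proof (HK i j Hc); lra).
    destruct (dpl_cont _ _ _ (expl_dpl (a i j - lij i j) 0 w) (eps / (K i j + 1))) as [del [Hd Q]].
    { apply Rdiv_lt_0_compat; lra. }
    exists del; split; auto. intros u Hu. specialize (Q u Hu). unfold F.
    replace (Rabs P - K i j * exp ((a i j - lij i j) * u + 0) - (Rabs P - K i j * exp ((a i j - lij i j) * w + 0)))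
      with (- K i j * (exp ((a i j - lij i j) * u + 0) - exp ((a i j - lij i j) * w + 0))) by ring.
    rewrite Rabs_mult, Rabs_Ropp, Rabs_right by (pose proof (HK i j Hc); lra).
    apply Rle_lt_trans with ((K i j + 1) * Rabs (exp ((a i j - lij i j) * u + 0) - exp ((a i j - lij i j) * w + 0))).
    { apply Rmult_le_compat_r; [apply Rabs_pos|lra]. }
    apply Rlt_le_trans with ((K i j + 1) * (eps / (K i j + 1))).
    { apply Rmult_lt_compat_l; auto. }
    right; field; lra. }
  assert (Hw : A <= s - tau <= B).
  { unfold A, B, Rmax. destruct (Rle_dec _ _); lra. }
  pose proof (closure_le F A B HAB Hcont Hopen (s - tau) Hw) as Hf. unfold F in Hf.
  rewrite Rabs_mult, Rabs_right by (left; apply exp_pos). fold P.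
  rewrite <- (Hexp (s - tau)).
  assert (0 < exp (- a i j * (s - tau))) by apply exp_pos.
  assert (Rabs P <= K i j * exp ((a i j - lij i j) * (s - tau) + 0)) by lra.
  apply Rle_trans with (exp (- a i j * (s - tau)) * (K i j * exp ((a i j - lij i j) * (s - tau) + 0))).
  { apply Rmult_le_compat_l; lra. }
  right; ring.
Qed.


Lemma hdw_ext_all g1 g2 lo hi t d : has_deriv_within g1 lo hi t d ->
  (forall s, g1 s = g2 s) -> has_deriv_within g2 lo hi t d.
Proof.
  intros H E eps Heps. destruct (H eps Heps) as [e [He Q]]. exists e; split; auto.
  intros h Hh Hh2 Hh3. rewrite <- (E (t+h)), <- (E t); auto.
Qed.
Lemma hdw_minus g1 g2 lo hi t d1 d2 : has_deriv_within g1 lo hi t d1 -> has_deriv_within g2 lo hi t d2 ->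
  has_deriv_within (fun s => g1 s - g2 s) lo hi t (d1 - d2).
Proof.
  intros H1 H2. pose proof (hdw_plus _ _ _ _ _ _ _ H1 (hdw_scal (-1) _ _ _ _ _ H2)).
  eapply hdw_deq; [eapply hdw_ext_all; [exact H|]|ring].
  intros; simpl; ring.
Qed.

Hypothesis HMf : 0 < Mf.
Hypothesis HfM : forall s, Rabs (f s) <= Mf.
Hypothesis HLf : 0 < Lf.
Hypothesis HfL : forall s1 s2, Rabs (f s1 - f s2) <= Lf * Rabs (s1 - s2).
Hypothesis HC6 : - lam m n th p a + dbar m n r th p a K C Mf Lf MF
    + INR p / psi_omega th p * ln (1 + delta_max th p * dbar m n r th p a K C Mf Lf MF) < 0.
Hypothesis Hphi : sol_T0 m n r a C f th zeta phi.
Hypothesis HphiB : forall t, inT0 th t -> vnorm m n (phi t) <= H0 m n r th p a K C Mf MF.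
Hypothesis Hx : sol_from m n r a C f th zeta t0 x.
Hypothesis Hl0 : th (2 * l0 - 1)%Z <= t0 <= th (2 * l0)%Z.

Definition H0v := H0 m n r th p a K C Mf MF.
Definition Dv := dbar m n r th p a K C Mf Lf MF.
Definition lamv := lam m n th p a.
Definition dl := delta_max th p.
Definition rho := 1 + dl * Dv.
Definition kk (j : nat) := (l0 + Z.of_nat j)%Z.
Definition lo j := th (2 * kk j - 1)%Z.
Definition hi j := th (2 * kk j)%Z.
Definition psi j t := t - th (2 * kk j)%Z + sg (kk j).
Definition s0 := sg l0.
Definition zz t i j := x t i j - phi t i j.
Definition cc i j := (Mf + H0v * Lf) * Csum m n r C i j.
Definition gg t i j := - (nbsum m n r i j (fun h l => C i j h l * f (x t h l)) * x t i j
   - nbsum m n r i j (fun h l => C i j h l * f (phi t h l)) * phi t i j).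

Lemma vnorm_ge v i j : in_cell m n i j -> Rabs (v i j) <= vnorm m n v.
Proof. intros H. unfold vnorm. apply (cellmax_ge m n (fun i j => Rabs (v i j))); auto. Qed.
Lemma vnorm_pos v : 0 <= vnorm m n v.
Proof. eapply Rle_trans; [apply Rabs_pos|apply (vnorm_ge v 1 1)]. unfold in_cell; lia. Qed.

Lemma inT0_t0 : inT0 th t0.
Proof. exists l0; auto. Qed.

Lemma H0_pos : 0 <= H0v.
Proof. pose proof (HphiB t0 inT0_t0). pose proof (vnorm_pos (phi t0)). unfold H0v; lra. Qed.

Lemma Csum_pos i j : in_cell m n i j -> 0 <= Csum m n r C i j.
Proof. intros H. unfold Csum. apply nbsum_nonneg. intros; apply HC; auto. Qed.

Lemma cc_pos i j : in_cell m n i j -> 0 <= cc i j.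
Proof.
  intros H. unfold cc. apply Rmult_le_pos; [|apply Csum_pos; auto].
  pose proof H0_pos. assert (0 <= H0v * Lf) by (apply Rmult_le_pos; lra). lra.
Qed.

Lemma ccK i j : in_cell m n i j -> cc i j * K i j <= Dv.
Proof.
  intros H. unfold cc, Dv, dbar. fold H0v.
  replace ((Mf + H0v * Lf) * Csum m n r C i j * K i j) with ((Mf + H0v * Lf) * (K i j * Csum m n r C i j)) by ring.
  apply Rmult_le_compat_l.
  { pose proof H0_pos. assert (0 <= H0v * Lf) by (apply Rmult_le_pos; lra). lra. }
  apply (cellmax_ge m n (fun i j => K i j * Csum m n r C i j)); auto.
Qed.

Lemma Dv_pos : 0 <= Dv.
Proof. pose proof (ccK 1 1 ltac:(unfold in_cell; lia)). pose proof (cc_pos 1 1 ltac:(unfold in_cell; lia)).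
  pose proof (HK 1 1 ltac:(unfold in_cell; lia)). assert (0 <= cc 1 1 * K 1 1) by (apply Rmult_le_pos; lra). lra. Qed.

Lemma phi_bound t i j : inT0 th t -> in_cell m n i j -> Rabs (phi t i j) <= H0v.
Proof. intros Ht Hc. eapply Rle_trans; [apply vnorm_ge; auto|apply HphiB; auto]. Qed.

Lemma g_bound t i j M : inT0 th t -> in_cell m n i j ->
  (forall h l, in_cell m n h l -> Rabs (zz t h l) <= M) -> Rabs (gg t i j) <= cc i j * M.
Proof.
  intros Ht Hc HM. unfold gg. rewrite Rabs_Ropp. rewrite nbsum_lin.
  unfold cc, Csum.
  assert (E : nbsum m n r i j (fun h l => C i j h l * ((Mf + H0v * Lf) * M)) =
     nbsum m n r i j (fun h l => C i j h l) * ((Mf + H0v * Lf) * M)) by apply (nbsum_mulr m n r i j (fun h l => C i j h l)).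
  replace ((Mf + H0v * Lf) * nbsum m n r i j (fun h l => C i j h l) * M) with
    (nbsum m n r i j (fun h l => C i j h l * ((Mf + H0v * Lf) * M))) by (rewrite E; ring).
  apply nbsum_abs. intros h l Hhl.
  replace (C i j h l * f (x t h l) * x t i j - C i j h l * f (phi t h l) * phi t i j)
    with (C i j h l * (f (x t h l) * zz t i j + (f (x t h l) - f (phi t h l)) * phi t i j)) by (unfold zz; ring).
  rewrite Rabs_mult, Rabs_right by (apply Rle_ge; apply HC; auto).
  replace (C i j h l * ((Mf + H0v * Lf) * M)) with (C i j h l * (Mf * M + Lf * M * H0v)) by ring.
  apply Rmult_le_compat_l; [apply HC; auto|].
  eapply Rle_trans; [apply Rabs_triang|]. rewrite !Rabs_mult.
  pose proof (HM i j Hc). pose proof (HM h l Hhl). pose proof (HfL (x t h l) (phi t h l)).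
  pose proof (phi_bound t i j Ht Hc). pose proof (HfM (x t h l)).
  assert (0 <= M) by (pose proof (Rabs_pos (zz t i j)); lra).
  apply Rplus_le_compat.
  - apply Rmult_le_compat; try apply Rabs_pos; auto.
  - apply Rmult_le_compat; try apply Rabs_pos; auto.
    eapply Rle_trans; [exact H1|]. apply Rmult_le_compat_l; [lra|]. unfold zz in H0. auto.
Qed.

Lemma abs_inv a0 b0 : Rabs a0 <= b0 -> - b0 <= a0 <= b0.
Proof. unfold Rabs; destruct (Rcase_abs a0); lra. Qed.

Lemma abs_mvt y Y dy dY l h : l <= h ->
  (forall t, l <= t <= h -> has_deriv_within y l h t (dy t)) ->
  (forall t, l <= t <= h -> has_deriv_within Y l h t (dY t)) ->
  (forall t, l < t < h -> Rabs (dy t) <= dY t) -> Rabs (y h - y l) <= Y h - Y l.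
Proof.
  intros Hle Hy HY Hb.
  assert (A1 : (fun s => y s - Y s) h <= (fun s => y s - Y s) l).
  { apply (mono_le (fun s => y s - Y s) (fun t => dy t - dY t) l h); auto.
    - intros t Ht. apply hdw_minus; auto.
    - intros t Ht. pose proof (Hb t Ht). apply abs_inv in H. lra. }
  assert (A2 : (fun s => (-1) * y s - Y s) h <= (fun s => (-1) * y s - Y s) l).
  { apply (mono_le (fun s => (-1) * y s - Y s) (fun t => (-1) * dy t - dY t) l h); auto.
    - intros t Ht. apply hdw_minus; auto. apply hdw_scal; auto.
    - intros t Ht. pose proof (Hb t Ht). apply abs_inv in H. lra. }
  simpl in A1, A2. apply Rabs_le. lra.
Qed.

Lemma kk0 : kk 0 = l0.
Proof. unfold kk; simpl; lia. Qed.

Lemma psi_lo j : psi j (lo j) = sg (kk j - 1)%Z.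
Proof. unfold psi, lo. pose proof (sk_step th (kk j)). unfold eta_k in H. lra. Qed.
Lemma psi_hi j : psi j (hi j) = sg (kk j).
Proof. unfold psi, hi. ring. Qed.
Lemma psi_range j t : lo j <= t <= hi j -> sg (kk j - 1)%Z <= psi j t <= sg (kk j).
Proof.
  intros Ht. pose proof (psi_lo j). pose proof (psi_hi j). unfold psi in *. lra.
Qed.
Lemma lo_hi j : lo j < hi j.
Proof. unfold lo, hi. pose proof (Hinc (2 * kk j - 1)%Z). replace (2 * kk j - 1 + 1)%Z with (2 * kk j)%Z in H by lia. auto. Qed.
Lemma hi_lo j : hi j < lo (S j).
Proof. unfold lo, hi. replace (2 * kk (S j) - 1)%Z with (2 * kk j + 1)%Z by (unfold kk; lia). apply Hinc. Qed.
Lemma hi_mono j1 j2 : (j1 < j2)%nat -> hi j1 < lo j2.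
Proof. intros H. unfold hi, lo. apply th_mono; auto. unfold kk; lia. Qed.
Lemma t0_hi : t0 <= hi 0.
Proof. unfold hi. rewrite kk0. lra. Qed.

Lemma zz_deriv j t i q : (1 <= j)%nat -> lo j <= t <= hi j -> in_cell m n i q ->
  has_deriv_within (fun s => zz s i q) (lo j) (hi j) t (- a i q * zz t i q + gg t i q).
Proof.
  intros Hj Ht Hc.
  assert (Ht0 : t0 <= th (2 * kk j)%Z).
  { pose proof t0_hi. unfold hi in *. rewrite kk0 in H. eapply Rle_trans; [exact H|].
    apply th_mono_le; auto. unfold kk; lia. }
  destruct (Hx (kk j) Ht0) as [Hode _].
  assert (HR : Rmax t0 (th (2 * kk j - 1)%Z) = lo j).
  { unfold lo. apply Rmax_right. pose proof (hi_mono 0 j ltac:(lia)). pose proof t0_hi. unfold lo in *. lra. }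
  rewrite HR in Hode. fold (hi j) in Hode.
  destruct (Hphi (kk j)) as [Hode2 _]. fold (lo j) (hi j) in Hode2.
  specialize (Hode t Ht i q Hc). specialize (Hode2 t Ht i q Hc).
  eapply hdw_deq; [apply hdw_minus; [exact Hode|exact Hode2]|].
  unfold net_rhs, gg, zz. ring.
Qed.

Lemma zz_jump j i q : in_cell m n i q ->
  zz (lo (S j)) i q = (1 - delta_k th (kk j) * a i q) * zz (hi j) i q + delta_k th (kk j) * gg (hi j) i q.
Proof.
  intros Hc.
  assert (Ht0 : t0 <= th (2 * kk j)%Z).
  { pose proof t0_hi. unfold hi in *. rewrite kk0 in H. eapply Rle_trans; [exact H|].
    apply th_mono_le; auto. unfold kk; lia. }
  destruct (Hx (kk j) Ht0) as [_ J1]. destruct (Hphi (kk j)) as [_ J2].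
  specialize (J1 i q Hc). specialize (J2 i q Hc).
  unfold zz, gg, lo, hi. replace (2 * kk (S j) - 1)%Z with (2 * kk j + 1)%Z by (unfold kk; lia).
  rewrite J1, J2. ring.
Qed.

Definition Bv := (cellmax m n K + 1) * vnorm m n (vsub (x (hi 0)) (phi (hi 0))) + 1.
Definition Phi j t := Bv * exp ((Dv - lamv) * (psi j t - s0)) * rho ^ j.
Definition yv j t i q := zz t i q * exp (a i q * (psi j t - s0)) / PR i q l0 (kk j - 1).
Definition Yf c j t := c * exp (Dv * (psi j t - s0)) * rho ^ j.

Lemma yv_deriv j t i q : (1 <= j)%nat -> lo j <= t <= hi j -> in_cell m n i q ->
  has_deriv_within (fun s => yv j s i q) (lo j) (hi j) t
    (gg t i q * exp (a i q * (psi j t - s0)) / PR i q l0 (kk j - 1)).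
Proof.
  intros Hj Ht Hc. set (P := PR i q l0 (kk j - 1)). assert (HP : P <> 0) by (apply PR_nz; auto).
  set (b := a i q * (- th (2 * kk j)%Z + sg (kk j) - s0)).
  assert (H2 : has_deriv_within (fun s => / P * exp (a i q * s + b)) (lo j) (hi j) t (/ P * (a i q * exp (a i q * t + b)))).
  { apply hdw_scal. apply dpl_hdw. apply expl_dpl. }
  pose proof (hdw_mult _ _ _ _ _ _ _ (zz_deriv j t i q Hj Ht Hc) H2) as H3.
  assert (Ee : forall s, exp (a i q * s + b) = exp (a i q * (psi j s - s0))).
  { intros s. f_equal. unfold b, psi. ring. }
  eapply hdw_deq; [eapply hdw_ext_all; [exact H3|]|].
  - intros s. simpl. unfold yv. fold P. rewrite Ee. unfold Rdiv. ring.
  - rewrite !Ee. unfold Rdiv. ring.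
Qed.

Lemma Yf_deriv c j t l h : has_deriv_within (Yf c j) l h t (Dv * Yf c j t).
Proof.
  set (b := Dv * (- th (2 * kk j)%Z + sg (kk j) - s0)).
  assert (H2 : has_deriv_within (fun s => (c * rho ^ j) * exp (Dv * s + b)) l h t ((c * rho ^ j) * (Dv * exp (Dv * t + b)))).
  { apply hdw_scal. apply dpl_hdw. apply expl_dpl. }
  assert (Ee : forall s, exp (Dv * s + b) = exp (Dv * (psi j s - s0))).
  { intros s. f_equal. unfold b, psi. ring. }
  eapply hdw_deq; [eapply hdw_ext_all; [exact H2|]|].
  - intros s. unfold Yf. rewrite Ee. ring.
  - unfold Yf. rewrite Ee. ring.
Qed.

Lemma lam_le i q : in_cell m n i q -> lamv <= lij i q.
Proof. intros H. unfold lamv, lam. apply (cellmin_le m n (lam_ij th p a)); auto. Qed.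

Lemma exp_le x0 y0 : x0 <= y0 -> exp x0 <= exp y0.
Proof. intros H. destruct H as [H|H]; [left; apply exp_increasing; auto|rewrite H; lra]. Qed.

Lemma exp_lam_le i q w : in_cell m n i q -> 0 <= w -> exp (- lij i q * w) <= exp (- lamv * w).
Proof.
  intros H Hw. pose proof (lam_le i q H). apply exp_le.
  assert (lamv * w <= lij i q * w) by (apply Rmult_le_compat_r; auto). lra.
Qed.

Lemma UB i q js ss l tv : in_cell m n i q -> (1 <= js)%nat ->
  sg (kk js - 1)%Z <= ss <= sg (kk js) -> (l0 <= l <= kk js)%Z -> sg (l - 1)%Z <= tv <= sg l -> tv <= ss ->
  exp (a i q * (tv - s0)) * Rabs (exp (- a i q * (ss - s0)) * PR i q l0 (kk js - 1))
   <= K i q * exp (- lij i q * (ss - tv)) * Rabs (PR i q l0 (l - 1)).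
Proof.
  intros Hc Hjs Hss Hl Htv Hts.
  assert (Hsp : PR i q l0 (kk js - 1) = PR i q l0 (l - 1) * PR i q l (kk js - 1)).
  { unfold PR. apply prodZ_split; lia. }
  assert (Hk := Kcl i q l (kk js - 1) tv ss Hc ltac:(lia) Htv ltac:(replace (kk js - 1 + 1)%Z with (kk js) by lia; lra) Hts).
  rewrite Hsp.
  replace (exp (- a i q * (ss - s0)) * (PR i q l0 (l - 1) * PR i q l (kk js - 1))) with
    ((exp (- a i q * (ss - tv)) * PR i q l (kk js - 1)) * (exp (- a i q * (tv - s0)) * PR i q l0 (l - 1))).
  2:{ replace (- a i q * (ss - s0)) with (- a i q * (ss - tv) + - a i q * (tv - s0)) by ring.
      rewrite exp_plus. ring. }
  rewrite (Rabs_mult (exp (- a i q * (ss - tv)) * PR i q l (kk js - 1))). rewrite (Rabs_mult (exp (- a i q * (tv - s0)))). rewrite (Rabs_right (exp (- a i q * (tv - s0)))) by (left; apply exp_pos).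
  replace (exp (a i q * (tv - s0)) * (Rabs (exp (- a i q * (ss - tv)) * PR i q l (kk js - 1)) * (exp (- a i q * (tv - s0)) * Rabs (PR i q l0 (l - 1)))))
    with ((exp (a i q * (tv - s0)) * exp (- a i q * (tv - s0))) * Rabs (exp (- a i q * (ss - tv)) * PR i q l (kk js - 1)) * Rabs (PR i q l0 (l - 1))) by ring.
  rewrite <- exp_plus. replace (a i q * (tv - s0) + - a i q * (tv - s0)) with 0 by ring. rewrite exp_0, Rmult_1_l.
  apply Rmult_le_compat_r; [apply Rabs_pos|exact Hk].
Qed.

Lemma chain i q G E P Rr Ph w : in_cell m n i q -> 0 <= G <= cc i q * Ph -> 0 <= Ph -> 0 <= w ->
  0 < Rabs P -> 0 < Rabs Rr -> 0 <= E ->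
  E * Rabs Rr <= K i q * exp (- lij i q * w) * Rabs P ->
  G * E / Rabs P <= Dv * (Ph * exp (- lamv * w) / Rabs Rr).
Proof.
  intros Hc HG HPh Hw HP HR HE HER.
  pose proof (cc_pos i q Hc). pose proof (HK i q Hc). pose proof (ccK i q Hc).
  pose proof (exp_lam_le i q w Hc Hw). pose proof (exp_pos (- lij i q * w)).
  assert (HE2 : E <= K i q * exp (- lij i q * w) * Rabs P / Rabs Rr).
  { apply Rmult_le_reg_r with (Rabs Rr); auto. unfold Rdiv. rewrite Rmult_assoc, Rinv_l, Rmult_1_r by lra. auto. }
  apply Rle_trans with (cc i q * Ph * (K i q * exp (- lij i q * w) * Rabs P / Rabs Rr) / Rabs P).
  { unfold Rdiv. apply Rmult_le_compat_r; [left; apply Rinv_0_lt_compat; auto|].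
    apply Rmult_le_compat; lra. }
  replace (cc i q * Ph * (K i q * exp (- lij i q * w) * Rabs P / Rabs Rr) / Rabs P)
    with ((cc i q * K i q) * (Ph * exp (- lij i q * w) / Rabs Rr)) by (field; lra).
  assert (0 <= Ph * exp (- lij i q * w) / Rabs Rr).
  { unfold Rdiv. apply Rmult_le_pos; [apply Rmult_le_pos; lra|left; apply Rinv_0_lt_compat; auto]. }
  apply Rle_trans with (Dv * (Ph * exp (- lij i q * w) / Rabs Rr)).
  { apply Rmult_le_compat_r; auto. }
  apply Rmult_le_compat_l; [apply Dv_pos|].
  unfold Rdiv. apply Rmult_le_compat_r; [left; apply Rinv_0_lt_compat; auto|].
  apply Rmult_le_compat_l; lra.
Qed.

Lemma key_id j t ss Rr : Rabs Rr <> 0 ->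
  Phi j t * exp (- lamv * (ss - psi j t)) / Rabs Rr = Yf (Bv / Rabs Rr * exp (- lamv * (ss - s0))) j t.
Proof.
  intros H. unfold Phi, Yf. set (rj := rho ^ j).
  assert (E : exp ((Dv - lamv) * (psi j t - s0)) * exp (- lamv * (ss - psi j t)) =
              exp (- lamv * (ss - s0)) * exp (Dv * (psi j t - s0))).
  { rewrite <- !exp_plus. f_equal. ring. }
  replace (Bv * exp ((Dv - lamv) * (psi j t - s0)) * rj * exp (- lamv * (ss - psi j t)) / Rabs Rr)
    with (Bv * (exp ((Dv - lamv) * (psi j t - s0)) * exp (- lamv * (ss - psi j t))) * rj / Rabs Rr) by (unfold Rdiv; ring).
  rewrite E. field; auto.
Qed.

Lemma rho_ge1 : 1 <= rho.
Proof. unfold rho. pose proof Dv_pos. pose proof (deltamax_pos th omega p Hinc Hp Hper). fold dl in H0.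
  assert (0 <= dl * Dv) by (apply Rmult_le_pos; lra). lra. Qed.

Lemma Bv_pos : 0 < Bv.
Proof.
  unfold Bv. pose proof (vnorm_pos (vsub (x (hi 0)) (phi (hi 0)))).
  pose proof (cellmax_ge m n K 1 1 ltac:(unfold in_cell; lia)). pose proof (HK 1 1 ltac:(unfold in_cell; lia)).
  assert (0 <= (cellmax m n K + 1) * vnorm m n (vsub (x (hi 0)) (phi (hi 0)))) by (apply Rmult_le_pos; lra). lra.
Qed.

Lemma Phi_pos j t : 0 < Phi j t.
Proof. unfold Phi. pose proof Bv_pos. pose proof rho_ge1. apply Rmult_lt_0_compat; [apply Rmult_lt_0_compat; auto; apply exp_pos|].
  apply pow_lt; lra. Qed.

Lemma absdiv3 g E P : 0 <= E -> Rabs (g * E / P) = Rabs g * E / Rabs P.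
Proof. intros H. unfold Rdiv. rewrite !Rabs_mult, Rabs_inv, (Rabs_right E); auto; lra. Qed.

Lemma inT0_piece j t : lo j <= t <= hi j -> inT0 th t.
Proof. intros H. exists (kk j). unfold lo, hi in H. auto. Qed.

Lemma psi_mono j t1 t2 : t1 <= t2 -> psi j t1 <= psi j t2.
Proof. unfold psi; lra. Qed.

Lemma big js ts i q : (1 <= js)%nat -> lo js <= ts <= hi js -> in_cell m n i q ->
  (forall j, (j < js)%nat -> forall t, lo j <= t <= hi j -> (j = 0%nat -> t = hi 0) ->
      forall h l, in_cell m n h l -> Rabs (zz t h l) <= Phi j t) ->
  (forall t, lo js <= t < ts -> forall h l, in_cell m n h l -> Rabs (zz t h l) <= Phi js t) ->
  Rabs (zz ts i q) < Phi js ts.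
Proof.
  intros Hjs Hts Hc Hprev Hcur.
  set (ss := psi js ts).
  assert (Hss : sg (kk js - 1)%Z <= ss <= sg (kk js)) by (apply psi_range; auto).
  set (Rr := exp (- a i q * (ss - s0)) * PR i q l0 (kk js - 1)).
  assert (HRr : 0 < Rabs Rr).
  { apply Rabs_pos_lt. unfold Rr. apply Rmult_integral_contrapositive; split.
    - pose proof (exp_pos (- a i q * (ss - s0))); lra.
    - apply PR_nz; auto. }
  set (Cst := Bv / Rabs Rr * exp (- lamv * (ss - s0))).
  assert (HCst : 0 <= Cst).
  { unfold Cst. pose proof Bv_pos. pose proof (exp_pos (- lamv * (ss - s0))).
    unfold Rdiv. apply Rmult_le_pos; [apply Rmult_le_pos; [lra|left; apply Rinv_0_lt_compat; auto]|lra]. }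
  assert (HYpos : forall j t, 0 <= Yf Cst j t).
  { intros j t. unfold Yf. pose proof rho_ge1. pose proof (exp_pos (Dv * (psi j t - s0))).
    apply Rmult_le_pos; [apply Rmult_le_pos; lra|apply pow_le; lra]. }
  assert (Hmono := sk_mono_le th p Hinc Hp).
  assert (Q : forall j, (j <= js)%nat -> forall t, lo j <= t <= hi j -> t <= ts -> (j = 0%nat -> t = hi 0) ->
     Rabs (yv j t i q - yv 0 (hi 0) i q) <= Yf Cst j t - Yf Cst 0 (hi 0)).
  { induction j.
    - intros _ t _ _ Ht0. rewrite (Ht0 eq_refl). rewrite Rminus_diag, Rabs_R0. lra.
    - intros Hj t Ht Htts _.
      assert (Hhj : hi j <= ts) by (pose proof (hi_lo j); lra).
      pose proof (lo_hi j) as Hlh.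
      assert (A1 := IHj ltac:(lia) (hi j) ltac:(lra) Hhj (fun E => f_equal hi E)).
      assert (A2 : Rabs (yv (S j) (lo (S j)) i q - yv j (hi j) i q) <= Yf Cst (S j) (lo (S j)) - Yf Cst j (hi j)).
      { set (nu := kk j).
        assert (Hkk : (kk (S j) - 1 = nu)%Z) by (unfold nu, kk; lia).
        assert (Hpsi1 : psi (S j) (lo (S j)) = sg nu) by (rewrite psi_lo, Hkk; auto).
        assert (Hpsi2 : psi j (hi j) = sg nu) by apply psi_hi.
        assert (HP1 : PR i q l0 (kk (S j) - 1) = PR i q l0 (kk j - 1) * (1 - delta_k th nu * a i q)).
        { rewrite Hkk. unfold PR.
          replace (prodZ l0 nu (fun nu0 => 1 - delta_k th nu0 * a i q)) with
            (prodZ l0 (kk j - 1 + 1) (fun nu0 => 1 - delta_k th nu0 * a i q)) by (f_equal; unfold nu; lia).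
          rewrite prodZ_snoc by (unfold kk; lia). f_equal. cbv beta. replace (kk j - 1 + 1)%Z with nu by (unfold nu; lia). reflexivity. }
        set (E := exp (a i q * (sg nu - s0))).
        assert (Hnz1 : PR i q l0 (kk j - 1) <> 0) by (apply PR_nz; auto).
        assert (Hnz2 : 1 - delta_k th nu * a i q <> 0) by (pose proof (HC1 i q nu Hc); lra).
        assert (Hdiff : yv (S j) (lo (S j)) i q - yv j (hi j) i q =
                        (delta_k th nu * gg (hi j) i q) * E / PR i q l0 (kk (S j) - 1)).
        { unfold yv. rewrite Hpsi1, Hpsi2. rewrite zz_jump by auto. rewrite HP1. fold nu. fold E. field. auto. }
        rewrite Hdiff. rewrite absdiv3 by (left; apply exp_pos).
        pose proof (delta_pos th Hinc nu) as Hdp.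
        pose proof (delta_le_max th omega p Hp Hper nu) as Hdm. fold dl in Hdm.
        rewrite Rabs_mult, (Rabs_right (delta_k th nu)) by lra.
        assert (HY : Yf Cst (S j) (lo (S j)) - Yf Cst j (hi j) = dl * Dv * Yf Cst j (hi j)).
        { unfold Yf. rewrite Hpsi1, Hpsi2. simpl pow. unfold rho. ring. }
        rewrite HY. unfold Cst. rewrite <- (key_id j (hi j) ss Rr) by lra.
        assert (Hz : forall h l, in_cell m n h l -> Rabs (zz (hi j) h l) <= Phi j (hi j)).
        { apply Hprev; [lia|lra|intros E0; rewrite E0; auto]. }
        assert (Hg := g_bound (hi j) i q (Phi j (hi j)) (inT0_piece j (hi j) ltac:(lra)) Hc Hz).
        assert (Htv1 : sg (kk (S j) - 1)%Z <= sg nu <= sg (kk (S j))).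
        { rewrite Hkk. split; [lra|]. apply Hmono. unfold nu, kk; lia. }
        assert (Htv : sg nu <= ss).
        { pose proof (Hmono nu (kk js - 1)%Z ltac:(unfold nu, kk; lia)). lra. }
        pose proof (UB i q js ss (kk (S j)) (sg nu) Hc Hjs Hss ltac:(unfold kk; lia) Htv1 Htv) as Hub.
        fold Rr in Hub. fold E in Hub.
        assert (Hch : Rabs (gg (hi j) i q) * E / Rabs (PR i q l0 (kk (S j) - 1)) <=
                   Dv * (Phi j (hi j) * exp (- lamv * (ss - psi j (hi j))) / Rabs Rr)).
        { rewrite Hpsi2. apply (chain i q); auto.
          + split; [apply Rabs_pos|auto].
          + left; apply Phi_pos.
          + lra.
          + apply Rabs_pos_lt. apply PR_nz; auto.
          + left; apply exp_pos. }
        assert (0 <= Rabs (gg (hi j) i q) * E / Rabs (PR i q l0 (kk (S j) - 1))).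
        { unfold Rdiv. apply Rmult_le_pos; [apply Rmult_le_pos; [apply Rabs_pos|left; apply exp_pos]|].
          left; apply Rinv_0_lt_compat. apply Rabs_pos_lt. apply PR_nz; auto. }
        replace (delta_k th nu * Rabs (gg (hi j) i q) * E / Rabs (PR i q l0 (kk (S j) - 1))) with
          (delta_k th nu * (Rabs (gg (hi j) i q) * E / Rabs (PR i q l0 (kk (S j) - 1)))) by (unfold Rdiv; ring).
        rewrite Rmult_assoc. apply Rmult_le_compat; lra. }
      assert (A3 : Rabs (yv (S j) t i q - yv (S j) (lo (S j)) i q) <= Yf Cst (S j) t - Yf Cst (S j) (lo (S j))).
      { apply (abs_mvt (fun s => yv (S j) s i q) (Yf Cst (S j))
          (fun s => gg s i q * exp (a i q * (psi (S j) s - s0)) / PR i q l0 (kk (S j) - 1))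
          (fun s => Dv * Yf Cst (S j) s) (lo (S j)) t).
        - lra.
        - intros s Hs. eapply hdw_restrict; [apply yv_deriv; auto; try lia; lra|lra|lra].
        - intros s Hs. apply Yf_deriv.
        - intros s Hs.
          assert (Hz : forall h l, in_cell m n h l -> Rabs (zz s h l) <= Phi (S j) s).
          { destruct (Nat.eq_dec (S j) js) as [E|E].
            - rewrite E. apply Hcur. rewrite <- E. lra.
            - apply Hprev; [lia|lra|discriminate]. }
          assert (Hg := g_bound s i q (Phi (S j) s) (inT0_piece (S j) s ltac:(lra)) Hc Hz).
          rewrite absdiv3 by (left; apply exp_pos).
          unfold Cst. rewrite <- (key_id (S j) s ss Rr) by lra.
          pose proof (psi_range (S j) s ltac:(lra)) as Hpr.
          assert (Htv : psi (S j) s <= ss).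
          { destruct (Nat.eq_dec (S j) js) as [E|E].
            - unfold ss. rewrite <- E. apply psi_mono. lra.
            - pose proof (Hmono (kk (S j)) (kk js - 1)%Z ltac:(unfold kk; lia)). lra. }
          pose proof (UB i q js ss (kk (S j)) (psi (S j) s) Hc Hjs Hss ltac:(unfold kk; lia) Hpr Htv) as Hub.
          fold Rr in Hub.
          apply (chain i q); auto.
          + split; [apply Rabs_pos|auto].
          + left; apply Phi_pos.
          + lra.
          + apply Rabs_pos_lt. apply PR_nz; auto.
          + left; apply exp_pos. }
      replace (yv (S j) t i q - yv 0 (hi 0) i q) with
        ((yv (S j) t i q - yv (S j) (lo (S j)) i q) + (yv (S j) (lo (S j)) i q - yv j (hi j) i q)
         + (yv j (hi j) i q - yv 0 (hi 0) i q)) by ring.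
      eapply Rle_trans; [apply Rabs_triang|].
      eapply Rle_trans; [apply Rplus_le_compat_r; apply Rabs_triang|]. lra. }
  assert (Q1 := Q js (le_n _) ts Hts (Rle_refl _) ltac:(intros E; lia)).
  assert (Y0 : yv 0 (hi 0) i q = zz (hi 0) i q).
  { unfold yv. rewrite psi_hi, kk0. unfold s0. rewrite Rminus_diag, Rmult_0_r, exp_0. unfold PR.
    rewrite prodZ_empty by lia. field. }
  assert (Yc : Yf Cst 0 (hi 0) = Cst).
  { unfold Yf. rewrite psi_hi, kk0. unfold s0. rewrite Rminus_diag, Rmult_0_r, exp_0. simpl. ring. }
  rewrite Y0, Yc in Q1.
  assert (Hexp1 : exp (a i q * (ss - s0)) * exp (- a i q * (ss - s0)) = 1).
  { rewrite <- exp_plus. replace (a i q * (ss - s0) + - a i q * (ss - s0)) with 0 by ring. apply exp_0. }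
  assert (Hzr : zz ts i q = yv js ts i q * Rr).
  { unfold yv, Rr. fold ss. assert (PR i q l0 (kk js - 1) <> 0) by (apply PR_nz; auto).
    replace (zz ts i q * exp (a i q * (ss - s0)) / PR i q l0 (kk js - 1) * (exp (- a i q * (ss - s0)) * PR i q l0 (kk js - 1)))
      with (zz ts i q * (exp (a i q * (ss - s0)) * exp (- a i q * (ss - s0))) * (PR i q l0 (kk js - 1) / PR i q l0 (kk js - 1)))
      by (unfold Rdiv; ring).
    rewrite Hexp1. unfold Rdiv. rewrite Rinv_r by auto. ring. }
  assert (YT : Yf Cst js ts * Rabs Rr = Phi js ts).
  { unfold Cst. rewrite <- (key_id js ts ss Rr) by lra. fold ss. rewrite Rminus_diag, Rmult_0_r, exp_0. field. lra. }
  assert (CR : Cst * Rabs Rr = Bv * exp (- lamv * (ss - s0))).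
  { unfold Cst. field. lra. }
  assert (Hs0 : s0 <= ss).
  { unfold s0. pose proof (Hmono l0 (kk js - 1)%Z ltac:(unfold kk; lia)). lra. }
  assert (HR0 : Rabs Rr <= K i q * exp (- lamv * (ss - s0))).
  { pose proof (UB i q js ss l0 s0 Hc Hjs Hss ltac:(unfold kk; lia)
       ltac:(unfold s0; split; [apply Hmono; lia|lra]) Hs0) as Hub.
    fold Rr in Hub. rewrite Rminus_diag, Rmult_0_r, exp_0, Rmult_1_l in Hub.
    unfold PR in Hub. rewrite prodZ_empty in Hub by lia. rewrite Rabs_R1, Rmult_1_r in Hub.
    eapply Rle_trans; [exact Hub|]. apply Rmult_le_compat_l; [pose proof (HK i q Hc); lra|].
    apply exp_lam_le; auto; lra. }
  set (z0n := vnorm m n (vsub (x (hi 0)) (phi (hi 0)))).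
  assert (Hz0 : Rabs (zz (hi 0) i q) <= z0n) by (apply (vnorm_ge (vsub (x (hi 0)) (phi (hi 0))) i q Hc)).
  assert (HKm : K i q <= cellmax m n K) by (apply cellmax_ge; auto).
  assert (Hz0p : 0 <= z0n) by apply vnorm_pos.
  assert (Hee : 0 < exp (- lamv * (ss - s0))) by apply exp_pos.
  rewrite Hzr, Rabs_mult.
  assert (Hy : Rabs (yv js ts i q) <= Rabs (zz (hi 0) i q) + (Yf Cst js ts - Cst)).
  { replace (yv js ts i q) with ((yv js ts i q - zz (hi 0) i q) + zz (hi 0) i q) by ring.
    eapply Rle_trans; [apply Rabs_triang|]. lra. }
  apply Rle_lt_trans with ((Rabs (zz (hi 0) i q) + (Yf Cst js ts - Cst)) * Rabs Rr).
  { apply Rmult_le_compat_r; [apply Rabs_pos|auto]. }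
  rewrite Rmult_plus_distr_r, Rmult_minus_distr_r, YT, CR.
  assert (Rabs (zz (hi 0) i q) * Rabs Rr <= z0n * (cellmax m n K * exp (- lamv * (ss - s0)))).
  { apply Rmult_le_compat; try apply Rabs_pos; auto. eapply Rle_trans; [exact HR0|].
    apply Rmult_le_compat_r; lra. }
  assert (z0n * cellmax m n K < Bv).
  { unfold Bv. fold z0n. assert (0 <= z0n * 1) by lra. nra. }
  assert (z0n * (cellmax m n K * exp (- lamv * (ss - s0))) < Bv * exp (- lamv * (ss - s0))).
  { rewrite <- Rmult_assoc. apply Rmult_lt_compat_r; auto. }
  lra.
Qed.

Lemma Phi_cont j t : forall eps, 0 < eps -> exists d, 0 < d /\ forall u, Rabs (u - t) < d -> Rabs (Phi j u - Phi j t) < eps.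
Proof.
  intros eps Heps.
  set (c := Dv - lamv). set (b := c * (- th (2 * kk j)%Z + sg (kk j) - s0)).
  set (M := Bv * rho ^ j).
  assert (HM : 0 < M) by (unfold M; pose proof Bv_pos; pose proof rho_ge1; apply Rmult_lt_0_compat; auto; apply pow_lt; lra).
  assert (E : forall u, Phi j u = M * exp (c * u + b)).
  { intros u. unfold Phi, M. replace ((Dv - lamv) * (psi j u - s0)) with (c * u + b) by (unfold b, c, psi; ring). ring. }
  destruct (dpl_cont _ _ _ (expl_dpl c b t) (eps / M)) as [d [Hd Q]]; [apply Rdiv_lt_0_compat; auto|].
  exists d; split; auto. intros u Hu. rewrite !E.
  replace (M * exp (c * u + b) - M * exp (c * t + b)) with (M * (exp (c * u + b) - exp (c * t + b))) by ring.
  rewrite Rabs_mult, Rabs_right by lra.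
  specialize (Q u Hu). apply Rlt_le_trans with (M * (eps / M)); [apply Rmult_lt_compat_l; auto|right; field; lra].
Qed.

Lemma good_all : forall j t, lo j <= t <= hi j -> (j = 0%nat -> t = hi 0) ->
  forall h l, in_cell m n h l -> Rabs (zz t h l) < Phi j t.
Proof.
  intros j. induction j as [j IH] using (well_founded_induction lt_wf).
  intros t Ht Ht0 h l Hc.
  destruct j as [|j'].
  - rewrite (Ht0 eq_refl). unfold Phi. rewrite psi_hi, kk0. unfold s0. rewrite Rminus_diag, Rmult_0_r, exp_0.
    simpl. rewrite Rmult_1_r, Rmult_1_r.
    pose proof (vnorm_ge (vsub (x (hi 0)) (phi (hi 0))) h l Hc). unfold vsub in H. fold (zz (hi 0) h l) in H.
    pose proof (vnorm_pos (vsub (x (hi 0)) (phi (hi 0)))).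
    pose proof (cellmax_ge m n K 1 1 ltac:(unfold in_cell; lia)). pose proof (HK 1 1 ltac:(unfold in_cell; lia)).
    unfold Bv. unfold vsub in *. set (vv := vnorm m n _) in *. assert (0 <= cellmax m n K * vv) by (apply Rmult_le_pos; lra). nra.
  - set (js := S j').
    set (P := fun t => forall h l, in_cell m n h l -> Rabs (zz t h l) < Phi js t).
    assert (HP : forall t, lo js <= t <= hi js -> P t).
    { apply real_ind; [left; apply lo_hi| |].
      - intros u Hu Hb. intros h' l' Hc'. apply big; auto; [unfold js; lia| |].
        + intros j0 Hj0 t1 Ht1 Ht10 h1 l1 Hc1. left. apply (IH j0 Hj0 t1 Ht1 Ht10 h1 l1 Hc1).
        + intros t1 Ht1 h1 l1 Hc1. left. apply Hb; auto.
      - intros u Hu Hb.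
        assert (Pu : P u) by (apply Hb; lra).
        destruct (fin_cells m n (fun h l d => forall v, u < v < u + d -> v <= hi js -> Rabs (zz v h l) < Phi js v))
          as [dd [Hdd Qdd]].
        3:{ exists dd; split; auto. intros v Hv Hv2 h1 l1 Hc1. apply Qdd; auto. }
        + intros i0 j0 d d' Q0 Hd v Hv Hv2. apply Q0; auto. lra.
        + intros i0 j0 Hc0. specialize (Pu i0 j0 Hc0).
          set (gap := Phi js u - Rabs (zz u i0 j0)).
          assert (Hgap : 0 < gap) by (unfold gap; lra).
          destruct (hdw_cont _ _ _ _ _ (zz_deriv js u i0 j0 ltac:(unfold js; lia) ltac:(lra) Hc0) (gap/2)) as [d1 [Hd1 Q1]]; [lra|].
          destruct (Phi_cont js u (gap/2)) as [d2 [Hd2 Q2]]; [lra|].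
          exists (Rmin d1 d2); split; [apply Rmin_pos; auto|].
          intros v Hv Hv2.
          assert (Hv3 : Rabs (v - u) < Rmin d1 d2) by (rewrite Rabs_right; lra).
          specialize (Q1 v ltac:(lra) (Rlt_le_trans _ _ _ Hv3 (Rmin_l _ _))).
          specialize (Q2 v (Rlt_le_trans _ _ _ Hv3 (Rmin_r _ _))).
          pose proof (Rabs_triang_inv (zz v i0 j0) (zz u i0 j0)).
          apply Rabs_def2 in Q2. unfold gap in *. lra. }
    apply HP; auto.
Qed.

Lemma conv : forall eps, 0 < eps -> exists T, forall t, inT0 th t -> T <= t ->
  vnorm m n (vsub (x t) (phi t)) < eps.
Proof.
  intros eps Heps.
  pose proof (psi_pos th omega p Hinc Hp Hper) as Hpsi. set (psiw := psi_omega th p) in *.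
  assert (Hpr : 0 < INR p) by (apply lt_0_INR; lia).
  pose proof rho_ge1 as Hrho.
  assert (Hln : 0 <= ln rho).
  { destruct (Req_dec rho 1) as [->|Hne]; [rewrite ln_1; lra|]. left. rewrite <- ln_1. apply ln_increasing; lra. }
  set (gam := (Dv - lamv) * psiw / INR p + ln rho).
  assert (Hgam : gam < 0).
  { unfold gam. fold lamv Dv psiw dl in HC6. fold rho in HC6.
    assert (E : (Dv - lamv) * psiw / INR p + ln rho = (psiw / INR p) * (- lamv + Dv + INR p / psiw * ln rho)) by (field; lra).
    rewrite E. assert (0 < psiw / INR p) by (apply Rdiv_lt_0_compat; auto).
    assert (0 < (psiw / INR p) * - (- lamv + Dv + INR p / psiw * ln rho)) by (apply Rmult_lt_0_compat; lra). lra. }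
  assert (HDl : Dv - lamv < 0).
  { assert ((Dv - lamv) * psiw / INR p < 0) by (unfold gam in Hgam; lra).
    destruct (Rlt_dec (Dv - lamv) 0) as [|Hnn]; auto. exfalso.
    assert (0 <= (Dv - lamv) * psiw / INR p); [|lra].
    unfold Rdiv. apply Rmult_le_pos; [apply Rmult_le_pos; lra|left; apply Rinv_0_lt_compat; auto]. }
  set (c0 := - (Dv - lamv) * (1 / INR p + 1) * psiw).
  assert (Hbound : forall j t, (1 <= j)%nat -> lo j <= t <= hi j -> Phi j t <= Bv * exp (c0 + INR j * gam)).
  { intros j t Hj Ht. unfold Phi.
    pose proof (psi_range j t Ht) as [Hp1 _].
    pose proof (sk_lower th omega p Hinc Hp Hper l0 (j - 1)) as Hl.
    replace (l0 + Z.of_nat (j - 1))%Z with (kk j - 1)%Z in Hl by (unfold kk; lia). fold psiw in Hl.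
    rewrite minus_INR in Hl by lia. simpl INR in Hl.
    assert (H1 : (Dv - lamv) * (psi j t - s0) <= (Dv - lamv) * ((INR j - 1) / INR p - 1) * psiw).
    { rewrite Rmult_assoc. apply Rmult_le_compat_neg_l; [lra|]. unfold s0. lra. }
    assert (H2 : rho ^ j = exp (INR j * ln rho)).
    { rewrite <- ln_pow by lra. rewrite exp_ln; auto. apply pow_lt; lra. }
    rewrite H2, Rmult_assoc, <- exp_plus. apply Rmult_le_compat_l; [left; apply Bv_pos|].
    apply exp_le. unfold c0, gam.
    assert (E : (Dv - lamv) * ((INR j - 1) / INR p - 1) * psiw =
                - (Dv - lamv) * (1 / INR p + 1) * psiw + INR j * ((Dv - lamv) * psiw / INR p)) by (field; lra).
    rewrite E in H1. lra. }
  destruct (INR_archimed 1 ((c0 - ln (eps / Bv)) / (- gam)) ltac:(lra)) as [N HN]. rewrite Rmult_1_r in HN.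
  assert (HN2 : c0 + INR N * gam < ln (eps / Bv)).
  { apply (Rmult_lt_compat_r (- gam)) in HN; [|lra].
    unfold Rdiv in HN. rewrite Rmult_assoc, Rinv_l, Rmult_1_r in HN by lra. lra. }
  assert (HBe : Bv * exp (c0 + INR N * gam) < eps).
  { pose proof Bv_pos. apply exp_increasing in HN2. rewrite exp_ln in HN2 by (apply Rdiv_lt_0_compat; lra).
    apply Rmult_lt_compat_l with (r := Bv) in HN2; auto. unfold Rdiv in HN2.
    rewrite <- Rmult_assoc, (Rmult_comm Bv eps), Rmult_assoc, Rinv_r, Rmult_1_r in HN2; lra. }
  exists (lo (S N)). intros t [k Hk] HT.
  assert (Hk2 : (kk (S N) <= k)%Z).
  { destruct (Z_le_dec (kk (S N)) k) as [|Hnn]; auto. exfalso.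
    assert (th (2 * k)%Z < lo (S N)) by (unfold lo; apply th_mono; auto; lia). lra. }
  set (j := Z.to_nat (k - l0)).
  assert (Hkj : kk j = k) by (unfold kk, j; unfold kk in Hk2; lia).
  assert (Hj : (S N <= j)%nat) by (unfold j; unfold kk in Hk2; lia).
  assert (Ht : lo j <= t <= hi j) by (unfold lo, hi; rewrite Hkj; auto).
  unfold vnorm. apply cellmax_lt; auto. intros i q Hc.
  pose proof (good_all j t Ht ltac:(intros E; lia) i q Hc) as G. unfold vsub. fold (zz t i q).
  eapply Rlt_le_trans; [exact G|]. eapply Rle_trans; [apply Hbound; auto; lia|].
  left. eapply Rle_lt_trans; [|exact HBe]. apply Rmult_le_compat_l; [left; apply Bv_pos|].
  apply exp_le. assert (INR N <= INR j) by (apply le_INR; lia).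
  assert (INR j * gam <= INR N * gam) by (rewrite (Rmult_comm (INR j)), (Rmult_comm (INR N)); apply Rmult_le_compat_neg_l; lra). lra.
Qed.
End Main.

Theorem lemma2 (m n r : nat) (a : nat -> nat -> R) (C : nat -> nat -> nat -> nat -> R)
  (f : R -> R) (th : Z -> R) (omega : R) (p : nat)
  (Lam : vec -> Prop) (F : vec -> vec) (zeta : Z -> vec)
  (K : nat -> nat -> R) (Mf Lf MF : R)
  (phi x : R -> vec) (t0 : R) :
  (1 <= m)%nat -> (1 <= n)%nat ->
  (forall i j, in_cell m n i j -> 0 < a i j) ->
  (forall i j h l, in_cell m n i j -> in_cell m n h l -> 0 <= C i j h l) ->
  continuity f ->
  (forall k, th k < th (k + 1)%Z) -> th (-1)%Z < 0 -> 0 < th 0%Z ->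
  0 < omega -> (1 <= p)%nat ->
  (forall k, th (k + 2 * Z.of_nat p)%Z = th k + omega) ->
  seq_compact m n Lam -> (forall v, Lam v -> Lam (F v)) -> cont_on m n Lam F ->
  (* zeta in Theta *)
  (forall k, Lam (zeta k) /\ zeta (k + 1)%Z = F (zeta k)) ->
  (* (C1) *)
  (forall i j k, in_cell m n i j -> delta_k th k * a i j <> 1) ->
  (* (C2) *)
  0 < lam m n th p a ->
  (* the fixed constants K_ij *)
  (forall i j, in_cell m n i j -> 0 < K i j) ->
  (forall i j (l k : Z) (s tau : R), in_cell m n i j ->
     s_k th (l - 1)%Z < tau <= s_k th l -> s_k th k < s <= s_k th (k + 1)%Z -> tau <= s ->
     Rabs (ufun th a i j l k s tau) <= K i j * exp (- lam_ij th p a i j * (s - tau))) ->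
  (* (C3) *)
  0 < Mf -> (forall s, Rabs (f s) <= Mf) ->
  (* (C4) *)
  0 < Lf -> (forall s1 s2, Rabs (f s1 - f s2) <= Lf * Rabs (s1 - s2)) ->
  (* M_F = max_{eta in Lambda} ||F(eta)|| *)
  (exists eta, Lam eta /\ vnorm m n (F eta) = MF) ->
  (forall eta, Lam eta -> vnorm m n (F eta) <= MF) ->
  (* (C5) *)
  (Mf + H0 m n r th p a K C Mf MF * Lf) * cbar m n r th p a K C < 1 ->
  (* (C6) *)
  - lam m n th p a + dbar m n r th p a K C Mf Lf MF
    + INR p / psi_omega th p * ln (1 + delta_max th p * dbar m n r th p a K C Mf Lf MF) < 0 ->
  (* phi = phi_zeta: the solution of (N_zeta) on T0 bounded by H0 *)
  sol_T0 m n r a C f th zeta phi ->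
  (forall t, inT0 th t -> vnorm m n (phi t) <= H0 m n r th p a K C Mf MF) ->
  (* x: a solution on T0 /\ [t0, oo) *)
  inT0 th t0 -> sol_from m n r a C f th zeta t0 x ->
  forall eps, 0 < eps -> exists T, forall t, inT0 th t -> t0 <= t -> T <= t ->
    vnorm m n (vsub (x t) (phi t)) < eps.

Proof.
  intros Hm Hn Ha HC Hf Hinc Hm1 H0 Hom Hp Hper Hcomp HLam Hcont Hzeta HC1 HC2 HK HKu HMf HfM HLf HfL HMF1 HMF2 HC5 HC6
    Hphi HphiB Ht0 Hx eps Heps.
  destruct Ht0 as [l0 Hl0].
  destruct (conv m n r a C f th omega p zeta K Mf Lf MF phi x t0 l0 Hm Hn HC Hinc Hp Hper HC1 HK HKu HMf HfM HLf HfL HC6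
    Hphi HphiB Hx Hl0 eps Heps) as [T HT].
  exists T. intros t Ht _ HTt. apply HT; auto.
Qed.
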